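(* Let $(V,m)$ be a discrete measure space and $(b,c)$ a connected graph over $(V,m)$. If there exists $f\in D(Q^{(N)})$ with $f_\infty\neq0$, then $Q^{(N)}\neq Q^{(D)}$. If, moreover, (FC) holds, i.e. $\widetilde L C_c(V)\subseteq\ell^2(V,m)$, then the restriction of $\widetilde L$ to $C_c(V)$ is not essentially selfadjoint in $\ell^2(V,m)$.
   Context: $V$ is a finite or countably infinite set and $m:V\to(0,\infty)$; $(V,m)$ is a discrete measure space. $C(V)$ is the set of all functions $V\to\mathbb C$, $C_c(V)$ the finitely supported ones, and $\ell^2(V,m)$ carries $\langle u,v\rangle=\sum_x u(x)\overline{v(x)}m(x)$. A graph over $(V,m)$ is a pair $(b,c)$ with $c:V\to[0,\infty)$, $b:V\times V\to[0,\infty)$, $b(x,x)=0$, $b(x,y)=b(y,x)$, $\sum_y b(x,y)<\infty$. A path from $x$ to $y$ is a finite sequence $x=x_1,\dots,x_n=y$ with $b(x_j,x_{j+1})>0$; the graph is connected if any two vertices are joined by a path. Let $\widetilde F=\{u\in C(V):\sum_y|b(x,y)u(y)|<\infty\ \forall x\}$ and $\widetilde L u(x)=\frac{1}{m(x)}\sum_y b(x,y)(u(x)-u(y))+\frac{c(x)}{m(x)}u(x)$ for $u\in\widetilde F$. $Q^{(N)}$ is the form on $\ell^2(V,m)$ with domain $D(Q^{(N)})=\{u\in\ell^2(V,m):\frac12\sum_{x,y}b(x,y)|u(x)-u(y)|^2+\sum_x c(x)|u(x)|^2<\infty\}$ and $Q^{(N)}(u,v)=\frac12\sum_{x,y}b(x,y)(u(x)-u(y))\overline{(v(x)-v(y))}+\sum_x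 c(x)u(x)\overline{v(x)}$. $Q^{(D)}$ is the closure of the restriction of $Q^{(N)}$ to $C_c(V)$. The length of a path $\gamma=(x_1,\dots,x_n)$ is $L(\gamma)=\sum_{j=1}^{n-1}b(x_j,x_{j+1})^{-1/2}$ and $d(x,y)=\inf\{L(\gamma):\gamma\text{ a path from }x\text{ to }y\}$, a metric on $V$. $\widehat V$ is the metric completion of $(V,d)$ and $V_\infty=\widehat V\setminus V$. Every $u\in D(Q^{(N)})$ satisfies $|u(x)-u(y)|\le Q^{(N)}(u,u)^{1/2}d(x,y)$ and extends uniquely to a Lipschitz function $\widehat u$ on $\widehat V$; $u_\infty$ is the restriction of $\widehat u$ to $V_\infty$ (and $u_\infty:=0$ if $V_\infty=\emptyset$). *)

(* Defs.v *)
From Stdlib Require Import Reals Lra List.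
Import ListNotations.
Open Scope R_scope.

Definition Cplx := (R * R)%type.
Definition RtoC (r : R) : Cplx := (r, 0).
Definition C0 : Cplx := (0, 0).
Definition Cadd (z w : Cplx) : Cplx := (fst z + fst w, snd z + snd w).
Definition Copp (z : Cplx) : Cplx := (- fst z, - snd z).
Definition Csub (z w : Cplx) : Cplx := Cadd z (Copp w).
Definition Cmul (z w : Cplx) : Cplx :=
  (fst z * fst w - snd z * snd w, fst z * snd w + snd z * fst w).
Definition Cconj (z : Cplx) : Cplx := (fst z, - snd z).
Definition Cscale (r : R) (z : Cplx) : Cplx := (r * fst z, r * snd z).
Definition Cnorm2 (z : Cplx) : R := fst z * fst z + snd z * snd z.
Definition Cnorm (z : Cplx) : R := sqrt (Cnorm2 z).

Definition Csum {I : Type} (f : I -> Cplx) (l : list I) : Cplx :=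
  fold_right (fun i acc => Cadd (f i) acc) C0 l.

Definition HasSumC {I : Type} (f : I -> Cplx) (z : Cplx) : Prop :=
  forall eps, 0 < eps -> exists l0 : list I,
    forall l, NoDup l -> incl l0 l -> Cnorm (Csub (Csum f l) z) < eps.

Definition HasSumR {I : Type} (f : I -> R) (s : R) : Prop :=
  HasSumC (fun i => RtoC (f i)) (RtoC s).

Section Graph.
Variable V : Type.
Variable m : V -> R.
Variable b : V -> V -> R.
Variable c : V -> R.

(* [is_path x l y]: x = x_1, l = [x_2; ...; x_n], x_n = y, b(x_j,x_{j+1}) > 0 *)
Inductive is_path : V -> list V -> V -> Prop :=
| path_single : forall x, is_path x [] x
| path_step : forall x z l y, 0 < b x z -> is_path z l y -> is_path x (z :: l) y.

Definition connected : Prop := forall x y, exists l, is_path x l y.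

Fixpoint path_length (x : V) (l : list V) : R :=
  match l with
  | [] => 0
  | z :: l' => / sqrt (b x z) + path_length z l'
  end.

(* [dist_le x y r] means d(x,y) <= r, where d(x,y) = inf over paths of L *)
Definition dist_le (x y : V) (r : R) : Prop :=
  forall eps, 0 < eps -> exists l, is_path x l y /\ path_length x l < r + eps.

Definition d_cauchy (xs : nat -> V) : Prop :=
  forall eps, 0 < eps -> exists N, forall n k, (N <= n)%nat -> (N <= k)%nat ->
    dist_le (xs n) (xs k) eps.

Definition d_converges_to (xs : nat -> V) (x : V) : Prop :=
  forall eps, 0 < eps -> exists N, forall n, (N <= n)%nat -> dist_le (xs n) x eps.

Definition C_converges_to (zs : nat -> Cplx) (z : Cplx) : Prop :=
  forall eps, 0 < eps -> exists N, forall n, (N <= n)%nat -> Cnorm (Csub (zs n) z) < eps.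

(* f_infty <> 0: some point of V_infty = hat V \ V (represented by a d-Cauchy
   sequence in V without limit in V) at which the Lipschitz extension hat f
   (= limit of f along the sequence) is nonzero. *)
Definition boundary_value_nonzero (f : V -> Cplx) : Prop :=
  exists xs : nat -> V, d_cauchy xs /\ (~ exists x, d_converges_to xs x) /\
    exists z, z <> C0 /\ C_converges_to (fun n => f (xs n)) z.

Definition Cc (u : V -> Cplx) : Prop :=
  exists l : list V, forall x, ~ In x l -> u x = C0.

Definition l2 (u : V -> Cplx) : Prop :=
  exists s, HasSumR (fun x => Cnorm2 (u x) * m x) s.

Definition l2dist2_le (u v : V -> Cplx) (r : R) : Prop :=
  exists s, HasSumR (fun x => Cnorm2 (Csub (u x) (v x)) * m x) s /\ s <= r.

Definition l2_converges_to (us : nat -> V -> Cplx) (u : V -> Cplx) : Prop :=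
  forall eps, 0 < eps -> exists N, forall n, (N <= n)%nat -> l2dist2_le (us n) u eps.

Definition inner_is (u v : V -> Cplx) (z : Cplx) : Prop :=
  HasSumC (fun x => Cscale (m x) (Cmul (u x) (Cconj (v x)))) z.
Definition inner_eq (u1 v1 u2 v2 : V -> Cplx) : Prop :=
  exists z, inner_is u1 v1 z /\ inner_is u2 v2 z.

Definition energy_is (u : V -> Cplx) (s : R) : Prop :=
  exists s1 s2,
    HasSumR (fun p : V * V => b (fst p) (snd p) * Cnorm2 (Csub (u (fst p)) (u (snd p)))) s1 /\
    HasSumR (fun x => c x * Cnorm2 (u x)) s2 /\ s = s1 / 2 + s2.

Definition DQN (u : V -> Cplx) : Prop := l2 u /\ exists s, energy_is u s.

Definition QN_val (u v : V -> Cplx) (z : Cplx) : Prop :=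
  exists z1 z2,
    HasSumC (fun p : V * V => Cscale (b (fst p) (snd p))
               (Cmul (Csub (u (fst p)) (u (snd p))) (Cconj (Csub (v (fst p)) (v (snd p)))))) z1 /\
    HasSumC (fun x => Cscale (c x) (Cmul (u x) (Cconj (v x)))) z2 /\
    z = Cadd (Cscale (/ 2) z1) z2.

Definition approx_seq (phis : nat -> V -> Cplx) (u : V -> Cplx) : Prop :=
  (forall n, Cc (phis n)) /\ l2_converges_to phis u /\
  forall eps, 0 < eps -> exists N, forall n k, (N <= n)%nat -> (N <= k)%nat ->
    exists s, energy_is (fun x => Csub (phis n x) (phis k x)) s /\ s < eps.

Definition DQD (u : V -> Cplx) : Prop := l2 u /\ exists phis, approx_seq phis u.

Definition QD_val (u v : V -> Cplx) (z : Cplx) : Prop :=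
  exists phis psis zs, approx_seq phis u /\ approx_seq psis v /\
    (forall n, QN_val (phis n) (psis n) (zs n)) /\ C_converges_to zs z.

Definition form_eq (D1 : (V -> Cplx) -> Prop) (q1 : (V -> Cplx) -> (V -> Cplx) -> Cplx -> Prop)
                   (D2 : (V -> Cplx) -> Prop) (q2 : (V -> Cplx) -> (V -> Cplx) -> Cplx -> Prop) : Prop :=
  (forall u, D1 u <-> D2 u) /\
  (forall u v z, D1 u -> D1 v -> (q1 u v z <-> q2 u v z)).

Definition Ltilde_at (u : V -> Cplx) (x : V) (z : Cplx) : Prop :=
  exists s, HasSumC (fun y => Cscale (b x y) (Csub (u x) (u y))) s /\
    z = Cscale (/ m x) (Cadd s (Cscale (c x) (u x))).

Definition FC : Prop :=
  forall phi, Cc phi -> exists w, l2 w /\ forall x, Ltilde_at phi x (w x).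

(* operators on l^2 are given by their graphs *)
Definition L0_graph (u w : V -> Cplx) : Prop := Cc u /\ forall x, Ltilde_at u x (w x).

Definition closure_graph (G : (V -> Cplx) -> (V -> Cplx) -> Prop) (u w : V -> Cplx) : Prop :=
  l2 u /\ l2 w /\ exists us ws : nat -> V -> Cplx,
    (forall n, G (us n) (ws n)) /\ l2_converges_to us u /\ l2_converges_to ws w.

Definition adjoint_graph (G : (V -> Cplx) -> (V -> Cplx) -> Prop) (v w : V -> Cplx) : Prop :=
  l2 v /\ l2 w /\ forall u u', G u u' -> inner_eq u' v u w.

Definition selfadjoint (G : (V -> Cplx) -> (V -> Cplx) -> Prop) : Prop :=
  forall v w, G v w <-> adjoint_graph G v w.

Definition essentially_selfadjoint (G : (V -> Cplx) -> (V -> Cplx) -> Prop) : Prop :=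
  selfadjoint (closure_graph G).

End Graph.

(* Main.v *)
Require Import Defs.
From Stdlib Require Import Reals Lra Lia List ClassicalEpsilon Classical Permutation FunctionalExtensionality.
Import ListNotations.
Open Scope R_scope.


Definition deq {I : Type} (x y : I) : {x = y} + {x <> y} := excluded_middle_informative (x = y).
Definition decb (P : Prop) : bool := if excluded_middle_informative P then true else false.
Lemma decb_true (P : Prop) : decb P = true <-> P.
Proof. unfold decb; destruct (excluded_middle_informative P); split; intuition congruence. Qed.
Lemma decb_false (P : Prop) : decb P = false <-> ~ P.
Proof. unfold decb; destruct (excluded_middle_informative P); split; intuition congruence. Qed.

Lemma Rabs_le_inv (x y : R) : Rabs x <= y -> - y <= x <= y.
Proof. intros H. pose proof (Rle_abs x). pose proof (Rle_abs (-x)). rewrite Rabs_Ropp in H1. lra. Qed.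

Definition sumL {I : Type} (f : I -> R) (l : list I) : R :=
  fold_right (fun i acc => f i + acc) 0 l.
Definition HS {I : Type} (f : I -> R) (s : R) : Prop :=
  forall eps, 0 < eps -> exists l0 : list I,
    forall l, NoDup l -> incl l0 l -> Rabs (sumL f l - s) < eps.
Definition Summable {I : Type} (f : I -> R) := exists s, HS f s.

Section Sums.
Context {I : Type}.
Implicit Types (f g : I -> R) (l : list I).

Lemma sumL_app f l1 l2 : sumL f (l1 ++ l2) = sumL f l1 + sumL f l2.
Proof. induction l1; simpl; lra. Qed.

Lemma sumL_perm f l l' : Permutation l l' -> sumL f l = sumL f l'.
Proof. induction 1; simpl; lra. Qed.

Lemma sumL_ext f g l : (forall i, In i l -> f i = g i) -> sumL f l = sumL g l.
Proof. induction l; simpl; intros H; auto. rewrite H, IHl; auto. Qed.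

Lemma sumL_plus f g l : sumL (fun i => f i + g i) l = sumL f l + sumL g l.
Proof. induction l; simpl; lra. Qed.
Lemma sumL_scal a f l : sumL (fun i => a * f i) l = a * sumL f l.
Proof. induction l; simpl; lra. Qed.
Lemma sumL_opp f l : sumL (fun i => - f i) l = - sumL f l.
Proof. induction l; simpl; lra. Qed.
Lemma sumL_minus f g l : sumL (fun i => f i - g i) l = sumL f l - sumL g l.
Proof. induction l; simpl; lra. Qed.
Lemma sumL_zero l : sumL (fun _ : I => 0) l = 0.
Proof. induction l; simpl; lra. Qed.
Lemma sumL_nonneg f l : (forall i, 0 <= f i) -> 0 <= sumL f l.
Proof. intros H; induction l; simpl; auto; try lra. specialize (H a); lra. Qed.
Lemma sumL_le f g l : (forall i, f i <= g i) -> sumL f l <= sumL g l.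
Proof. intros H; induction l; simpl; try lra. specialize (H a); lra. Qed.
Lemma sumL_abs f l : Rabs (sumL f l) <= sumL (fun i => Rabs (f i)) l.
Proof. induction l; simpl. rewrite Rabs_R0; lra.
  eapply Rle_trans. apply Rabs_triang. lra. Qed.

Lemma sumL_filter f (P : I -> bool) l :
  sumL f l = sumL f (filter P l) + sumL f (filter (fun i => negb (P i)) l).
Proof. induction l; simpl. lra. destruct (P a); simpl; lra. Qed.

Lemma sumL_support f F l : NoDup F -> NoDup l -> incl F l ->
  (forall i, ~ In i F -> f i = 0) -> sumL f l = sumL f F.
Proof.
  intros HF Hl Hinc H0.
  rewrite (sumL_filter f (fun i => decb (In i F)) l).
  assert (E1 : sumL f (filter (fun i => negb (decb (In i F))) l) = 0).
  { assert (forall l', (forall i, In i l' -> ~ In i F) -> sumL f l' = 0).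
    { induction l'; simpl; intros; auto. rewrite H0, IHl'; auto; lra. }
    apply H. intros i Hi. apply filter_In in Hi. destruct Hi as [_ Hi].
    destruct (decb (In i F)) eqn:E; simpl in Hi; try discriminate.
    apply decb_false; auto. }
  rewrite E1, Rplus_0_r. apply sumL_perm.
  apply NoDup_Permutation. apply NoDup_filter; auto. auto.
  intros x; rewrite filter_In, decb_true; intuition.
Qed.

Lemma sumL_sub f l0 l : (forall i, 0 <= f i) -> NoDup l0 -> NoDup l -> incl l0 l ->
  sumL f l0 <= sumL f l.
Proof.
  intros Hnn H0 Hl Hinc.
  rewrite (sumL_filter f (fun i => decb (In i l0)) l).
  assert (sumL f (filter (fun i => decb (In i l0)) l) = sumL f l0).
  { apply sumL_perm. apply NoDup_Permutation. apply NoDup_filter; auto. auto.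
    intros x; rewrite filter_In, decb_true; intuition. }
  rewrite H. pose proof (sumL_nonneg f (filter (fun i => negb (decb (In i l0))) l) Hnn). lra.
Qed.

Definition ndup (l : list I) := nodup deq l.
Lemma ndup_NoDup l : NoDup (ndup l). Proof. apply NoDup_nodup. Qed.
Lemma ndup_In l x : In x (ndup l) <-> In x l. Proof. apply nodup_In. Qed.

Lemma HS_unique f s t : HS f s -> HS f t -> s = t.
Proof.
  intros Hs Ht. apply Rle_antisym; apply Rnot_lt_le; intro Hlt;
  [ destruct (Hs ((s - t)/2)) as [l1 H1]; [lra|]; destruct (Ht ((s - t)/2)) as [l2 H2]; [lra|]
  | destruct (Hs ((t - s)/2)) as [l1 H1]; [lra|]; destruct (Ht ((t - s)/2)) as [l2 H2]; [lra|] ];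
  set (l := ndup (l1 ++ l2));
  (assert (A1 : incl l1 l) by (intros x Hx; apply ndup_In, in_or_app; auto));
  (assert (A2 : incl l2 l) by (intros x Hx; apply ndup_In, in_or_app; auto));
  specialize (H1 l (ndup_NoDup _) A1); specialize (H2 l (ndup_NoDup _) A2);
  apply Rabs_def2 in H1; apply Rabs_def2 in H2; lra.
Qed.

Lemma HS_ext f g s : (forall i, f i = g i) -> HS f s -> HS g s.
Proof. intros E H eps He; destruct (H eps He) as [l0 Hl0]; exists l0; intros l Hl Hi.
  rewrite <- (sumL_ext f g); auto. Qed.

Lemma HS_plus f g s t : HS f s -> HS g t -> HS (fun i => f i + g i) (s + t).
Proof.
  intros Hs Ht eps He.
  destruct (Hs (eps/2)) as [l1 H1]; [lra|]. destruct (Ht (eps/2)) as [l2 H2]; [lra|].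
  exists (l1 ++ l2). intros l Hl Hinc.
  rewrite sumL_plus.
  assert (incl l1 l) by (intros x Hx; apply Hinc, in_or_app; auto).
  assert (incl l2 l) by (intros x Hx; apply Hinc, in_or_app; auto).
  specialize (H1 l Hl H). specialize (H2 l Hl H0).
  apply Rabs_def2 in H1; apply Rabs_def2 in H2. apply Rabs_def1; lra.
Qed.

Lemma HS_scal a f s : HS f s -> HS (fun i => a * f i) (a * s).
Proof.
  intros Hs eps He.
  destruct (Hs (eps / (Rabs a + 1))) as [l0 H0].
  { apply Rdiv_lt_0_compat; auto. pose proof (Rabs_pos a); lra. }
  exists l0; intros l Hl Hinc. rewrite sumL_scal.
  specialize (H0 l Hl Hinc).
  replace (a * sumL f l - a * s) with (a * (sumL f l - s)) by ring.
  rewrite Rabs_mult. pose proof (Rabs_pos a).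
  apply Rle_lt_trans with (Rabs a * (eps / (Rabs a + 1))).
  apply Rmult_le_compat_l; lra.
  apply Rmult_lt_reg_l with (Rabs a + 1). lra.
  replace ((Rabs a + 1) * (Rabs a * (eps / (Rabs a + 1)))) with (Rabs a * eps) by (field; lra).
  nra.
Qed.

Lemma HS_opp f s : HS f s -> HS (fun i => - f i) (- s).
Proof. intros H. apply HS_ext with (fun i => -1 * f i). intros; ring.
  replace (-s) with (-1 * s) by ring. apply HS_scal; auto. Qed.

Lemma HS_minus f g s t : HS f s -> HS g t -> HS (fun i => f i - g i) (s - t).
Proof. intros. apply HS_plus; auto. apply HS_opp; auto. Qed.

Lemma HS_zero : HS (fun _ : I => 0) 0.
Proof. intros eps He; exists []; intros. rewrite sumL_zero, Rminus_0_r, Rabs_R0; auto. Qed.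

Lemma HS_finite f F : NoDup F -> (forall i, ~ In i F -> f i = 0) -> HS f (sumL f F).
Proof. intros HF H0 eps He. exists F. intros l Hl Hinc.
  rewrite (sumL_support f F l); auto. unfold Rminus; rewrite Rplus_opp_r, Rabs_R0; auto. Qed.

Lemma HS_nonneg_le f s l : (forall i, 0 <= f i) -> HS f s -> NoDup l -> sumL f l <= s.
Proof.
  intros Hnn Hs Hl. apply Rnot_lt_le; intro Hlt.
  destruct (Hs (sumL f l - s)) as [l0 H0]; [lra|].
  set (l' := ndup (l ++ l0)).
  assert (incl l0 l') by (intros x Hx; apply ndup_In, in_or_app; auto).
  assert (incl l l') by (intros x Hx; apply ndup_In, in_or_app; auto).
  specialize (H0 l' (ndup_NoDup _) H).
  pose proof (sumL_sub f l l' Hnn Hl (ndup_NoDup _) H1).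
  apply Rabs_def2 in H0. lra.
Qed.

Lemma HS_nonneg_pos f s : (forall i, 0 <= f i) -> HS f s -> 0 <= s.
Proof. intros. pose proof (HS_nonneg_le f s [] H H0 (NoDup_nil _)). simpl in H1; lra. Qed.

Lemma HS_term_le f s i : (forall i, 0 <= f i) -> HS f s -> f i <= s.
Proof. intros. assert (NoDup [i]) by (constructor; auto; constructor).
  pose proof (HS_nonneg_le f s [i] H H0 H1). simpl in H2; lra. Qed.

Lemma HS_le f g s t : (forall i, f i <= g i) -> HS f s -> HS g t -> s <= t.
Proof.
  intros Hle Hs Ht. apply Rnot_lt_le; intro Hlt.
  destruct (Hs ((s - t)/2)) as [l1 H1]; [lra|]; destruct (Ht ((s - t)/2)) as [l2 H2]; [lra|].
  set (l := ndup (l1 ++ l2)).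
  assert (A1 : incl l1 l) by (intros x Hx; apply ndup_In, in_or_app; auto).
  assert (A2 : incl l2 l) by (intros x Hx; apply ndup_In, in_or_app; auto).
  specialize (H1 l (ndup_NoDup _) A1); specialize (H2 l (ndup_NoDup _) A2).
  pose proof (sumL_le f g l Hle).
  apply Rabs_def2 in H1; apply Rabs_def2 in H2; lra.
Qed.

Lemma HS_nonneg_bound f B : (forall i, 0 <= f i) -> (forall l, NoDup l -> sumL f l <= B) ->
  exists s, HS f s /\ s <= B.
Proof.
  intros Hnn HB.
  set (E := fun r => exists l, NoDup l /\ r = sumL f l).
  assert (bE : bound E) by (exists B; intros r [l [Hl ->]]; auto).
  assert (nE : exists r, E r) by (exists 0; exists []; split; [constructor|reflexivity]).
  destruct (completeness E bE nE) as [s [Hub Hlub]].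
  exists s; split.
  - intros eps He.
    assert (exists l, NoDup l /\ s - eps < sumL f l).
    { apply NNPP; intro Hn. assert (s <= s - eps). apply Hlub. intros r [l [Hl ->]].
      apply Rnot_lt_le; intro; apply Hn; exists l; auto. lra. }
    destruct H as [l0 [Hl0 Hlt]]. exists l0. intros l Hl Hinc.
    pose proof (sumL_sub f l0 l Hnn Hl0 Hl Hinc).
    assert (sumL f l <= s) by (apply Hub; exists l; auto).
    apply Rabs_def1; lra.
  - apply Hlub. intros r [l [Hl ->]]; auto.
Qed.

Lemma HS_dom f g t : (forall i, 0 <= f i <= g i) -> HS g t -> exists s, HS f s /\ s <= t.
Proof.
  intros H Hg. apply HS_nonneg_bound. intros i; apply H.
  intros l Hl. eapply Rle_trans. apply (sumL_le f g). intros; apply H.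
  apply HS_nonneg_le; auto. intros i; specialize (H i); lra.
Qed.

Lemma Summable_abs f g : (forall i, Rabs (f i) <= g i) -> Summable g -> Summable f.
Proof.
  intros H [t Ht].
  destruct (HS_dom (fun i => (Rabs (f i) + f i)/2) g t) as [s1 [H1 _]]; auto.
  { intros i; specialize (H i). split.
    pose proof (Rle_abs (- f i)) as Q. rewrite Rabs_Ropp in Q. lra.
    pose proof (Rle_abs (f i)). lra. }
  destruct (HS_dom (fun i => (Rabs (f i) - f i)/2) g t) as [s2 [H2 _]]; auto.
  { intros i; specialize (H i). split.
    pose proof (Rle_abs (f i)). lra.
    pose proof (Rle_abs (- f i)) as Q. rewrite Rabs_Ropp in Q. lra. }
  exists (s1 - s2). eapply HS_ext; [|apply HS_minus; [exact H1|exact H2]].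
  intros; simpl; field.
Qed.

Lemma HS_sumlist {J : Type} (F : J -> I -> R) (S : J -> R) (ys : list J) :
  (forall y, In y ys -> HS (F y) (S y)) ->
  HS (fun x => sumL (fun y => F y x) ys) (sumL S ys).
Proof.
  induction ys; simpl; intros H. apply HS_zero.
  apply HS_plus; auto.
Qed.

End Sums.

Definition sumT {I : Type} (f : I -> R) : R :=
  match excluded_middle_informative (Summable f) with
  | left P => proj1_sig (constructive_indefinite_description _ P)
  | right _ => 0 end.

Lemma sumT_spec {I : Type} (f : I -> R) : Summable f -> HS f (sumT f).
Proof. intros H. unfold sumT. destruct excluded_middle_informative; [|contradiction].
  destruct constructive_indefinite_description; simpl; auto. Qed.
Lemma sumT_eq {I : Type} (f : I -> R) s : HS f s -> sumT f = s.
Proof. intros H. eapply HS_unique; [apply sumT_spec; exists s|]; eauto. Qed.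


Section Reindex.
Context {J I : Type} (e : J -> I) (einj : forall x y, e x = e y -> x = y).

Definition pre (i : I) : list J :=
  match excluded_middle_informative (exists j, e j = i) with
  | left P => [proj1_sig (constructive_indefinite_description _ P)]
  | right _ => [] end.

Lemma pre_spec i j : In j (pre i) <-> e j = i.
Proof. unfold pre. destruct excluded_middle_informative as [P|P].
  - destruct constructive_indefinite_description as [j' Hj']; simpl. split.
    + intros [<-|[]]; auto.
    + intros H; left. apply einj; congruence.
  - simpl; split; [intros []|]. intros H; apply P; eauto.
Qed.

Lemma HS_reindex (g : J -> R) (F : I -> R) s :
  HS g s -> (forall j, F (e j) = g j) -> (forall i, (~ exists j, e j = i) -> F i = 0) ->
  HS F s.
Proof.
  intros Hg HFe HF0 eps He. destruct (Hg eps He) as [l0 H0].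
  exists (map e l0). intros l Hl Hinc.
  set (l' := flat_map pre l).
  assert (Esum : sumL F l = sumL g l').
  { unfold l'; clear Hl Hinc. induction l as [|i l IH]; simpl; auto.
    rewrite sumL_app, IH. f_equal. unfold pre. destruct excluded_middle_informative as [P|P].
    - destruct constructive_indefinite_description as [j' Hj']; simpl. subst; rewrite HFe; ring.
    - simpl. rewrite HF0; auto; ring. }
  assert (ND : NoDup l').
  { unfold l'; clear Hinc Esum. induction Hl as [|i l Hni Hl IH]; simpl. constructor.
    apply NoDup_app; auto.
    - unfold pre; destruct excluded_middle_informative; repeat constructor; simpl; auto.
    - intros j Hj1 Hj2. apply pre_spec in Hj1. apply in_flat_map in Hj2.
      destruct Hj2 as [i' [Hi' Hj']]. apply pre_spec in Hj'. subst; congruence. }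
  assert (Inc : incl l0 l').
  { intros j Hj. unfold l'. apply in_flat_map. exists (e j). split.
    apply Hinc, in_map; auto. apply pre_spec; auto. }
  rewrite Esum. apply H0; auto.
Qed.

Lemma HS_restrict (F : I -> R) t : (forall i, 0 <= F i) -> HS F t ->
  exists s, HS (fun j => F (e j)) s /\ s <= t.
Proof.
  intros Hnn HF. apply HS_nonneg_bound. intros; auto.
  intros l Hl. replace (sumL (fun j => F (e j)) l) with (sumL F (map e l)).
  apply HS_nonneg_le; auto. apply (FinFun.Injective_map_NoDup (f:=e)); [intros x y; apply einj| auto].
  clear; induction l; simpl; congruence.
Qed.
End Reindex.

Section SumT.
Context {I : Type}.
Implicit Types (f g : I -> R).
Lemma Summable_plus f g : Summable f -> Summable g -> Summable (fun i => f i + g i).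
Proof. intros [s Hs] [t Ht]; exists (s+t); apply HS_plus; auto. Qed.
Lemma Summable_scal a f : Summable f -> Summable (fun i => a * f i).
Proof. intros [s Hs]; exists (a*s); apply HS_scal; auto. Qed.
Lemma Summable_minus f g : Summable f -> Summable g -> Summable (fun i => f i - g i).
Proof. intros [s Hs] [t Ht]; exists (s-t); apply HS_minus; auto. Qed.
Lemma Summable_opp f : Summable f -> Summable (fun i => - f i).
Proof. intros [s Hs]; exists (-s); apply HS_opp; auto. Qed.
Lemma Summable_ext f g : (forall i, f i = g i) -> Summable f -> Summable g.
Proof. intros E [s Hs]; exists s; eapply HS_ext; eauto. Qed.
Lemma sumT_plus f g : Summable f -> Summable g -> sumT (fun i => f i + g i) = sumT f + sumT g.
Proof. intros Hf Hg. apply sumT_eq, HS_plus; apply sumT_spec; auto. Qed.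
Lemma sumT_minus f g : Summable f -> Summable g -> sumT (fun i => f i - g i) = sumT f - sumT g.
Proof. intros Hf Hg. apply sumT_eq, HS_minus; apply sumT_spec; auto. Qed.
Lemma sumT_scal a f : Summable f -> sumT (fun i => a * f i) = a * sumT f.
Proof. intros Hf. apply sumT_eq, HS_scal; apply sumT_spec; auto. Qed.
Lemma sumT_ext f g : (forall i, f i = g i) -> sumT f = sumT g.
Proof. intros E. assert (f = g) by (apply functional_extensionality; auto). subst; auto. Qed.
Lemma sumT_le f g : (forall i, f i <= g i) -> Summable f -> Summable g -> sumT f <= sumT g.
Proof. intros. eapply HS_le; eauto; apply sumT_spec; auto. Qed.
Lemma sumT_nonneg f : (forall i, 0 <= f i) -> 0 <= sumT f.
Proof. intros H. unfold sumT. destruct excluded_middle_informative; [|lra].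
  destruct constructive_indefinite_description; simpl. eapply HS_nonneg_pos; eauto. Qed.
Lemma sumT_term_le f i : (forall i, 0 <= f i) -> Summable f -> f i <= sumT f.
Proof. intros. apply HS_term_le; auto. apply sumT_spec; auto. Qed.
Lemma Summable_dom f g : (forall i, 0 <= f i <= g i) -> Summable g -> Summable f /\ sumT f <= sumT g.
Proof. intros H [t Ht]. destruct (HS_dom f g t H Ht) as [s [Hs Hst]].
  split. exists s; auto. rewrite (sumT_eq f s), (sumT_eq g t); auto. Qed.
End SumT.


Section L2.
Context {I : Type}.
Implicit Types (a b : I -> R).
Definition l2c a := Summable (fun i => a i * a i).
Definition nn a := sumT (fun i => a i * a i).
Definition ip a b := sumT (fun i => a i * b i).

Lemma sq_nonneg' (x : R) : 0 <= x * x. Proof. nra. Qed.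

Lemma l2_prod a b : l2c a -> l2c b -> Summable (fun i => a i * b i).
Proof. intros Ha Hb. apply Summable_abs with (fun i => (a i * a i + b i * b i) / 2).
  intros i. pose proof (sq_nonneg' (a i - b i)). pose proof (sq_nonneg' (a i + b i)).
  destruct (Rle_dec 0 (a i * b i)). rewrite Rabs_right; nra.
  rewrite Rabs_left; nra.
  apply Summable_ext with (fun i => / 2 * (a i * a i + b i * b i)). intros; field.
  apply Summable_scal, Summable_plus; auto. Qed.

Lemma l2_plus a b : l2c a -> l2c b -> l2c (fun i => a i + b i).
Proof. intros Ha Hb. unfold l2c. apply Summable_ext with
  (fun i => a i * a i + (2 * (a i * b i) + b i * b i)). intros; ring.
  apply Summable_plus; auto. apply Summable_plus; auto. apply Summable_scal, l2_prod; auto. Qed.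
Lemma l2_scal t a : l2c a -> l2c (fun i => t * a i).
Proof. intros Ha. unfold l2c. apply Summable_ext with (fun i => (t*t) * (a i * a i)). intros; ring.
  apply Summable_scal; auto. Qed.
Lemma l2_minus a b : l2c a -> l2c b -> l2c (fun i => a i - b i).
Proof. intros. apply l2_plus; auto. eapply Summable_ext; [|apply (l2_scal (-1) b); auto].
  intros; simpl; ring. Qed.
Lemma l2_ext a b : (forall i, a i = b i) -> l2c a -> l2c b.
Proof. intros E H; eapply Summable_ext; [|exact H]. intros i; simpl; rewrite (E i); auto. Qed.

Ltac summ := repeat first [assumption | apply l2_prod; assumption | apply Summable_plus | apply Summable_minus | apply Summable_scal | apply Summable_opp ].

Lemma nn_nonneg a : 0 <= nn a.
Proof. apply sumT_nonneg; intros; apply sq_nonneg'. Qed.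
Lemma coord_le a i : l2c a -> a i * a i <= nn a.
Proof. intros. apply (sumT_term_le (fun i => a i * a i)); auto. intros; apply sq_nonneg'. Qed.

Lemma ip_bound a b lam : 0 < lam -> l2c a -> l2c b ->
  Rabs (ip a b) <= (lam * nn a + nn b / lam) / 2.
Proof.
  intros Hl Ha Hb.
  assert (Hg : Summable (fun i => (lam * (a i * a i) + / lam * (b i * b i)) / 2)).
  { apply Summable_ext with (fun i => /2 * (lam * (a i * a i) + / lam * (b i * b i))). intros; field; lra.
    apply Summable_scal, Summable_plus; apply Summable_scal; auto. }
  assert (Eg : sumT (fun i => (lam * (a i * a i) + / lam * (b i * b i)) / 2) = (lam * nn a + nn b / lam) / 2).
  { rewrite (sumT_ext _ (fun i => /2 * (lam * (a i * a i) + / lam * (b i * b i)))).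
    rewrite sumT_scal, sumT_plus, !sumT_scal; auto; try (apply Summable_scal; auto).
    unfold nn; field; lra. apply Summable_plus; apply Summable_scal; auto. intros; field; lra. }
  assert (Hpt : forall i, Rabs (a i * b i) <= (lam * (a i * a i) + / lam * (b i * b i)) / 2).
  { intros i. assert (0 <= (lam * a i - b i) * (lam * a i - b i)) by apply sq_nonneg'.
    assert (0 <= (lam * a i + b i) * (lam * a i + b i)) by apply sq_nonneg'.
    assert (0 < / lam) by (apply Rinv_0_lt_compat; auto).
    assert (lam * / lam = 1) by (field; lra).
    apply Rabs_le. split; nra. }
  rewrite <- Eg. apply Rabs_le; split.
  - replace (- sumT (fun i => (lam * (a i * a i) + / lam * (b i * b i)) / 2)) with
      (sumT (fun i => - ((lam * (a i * a i) + / lam * (b i * b i)) / 2))).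
    apply sumT_le; auto. intros i; specialize (Hpt i); apply Rabs_le_inv in Hpt; lra.
    apply Summable_ext with (fun i => -1 * ((lam * (a i * a i) + / lam * (b i * b i)) / 2)).
    intros; ring. apply Summable_scal; auto. apply l2_prod; auto.
    rewrite (sumT_ext _ (fun i => -1 * ((lam * (a i * a i) + / lam * (b i * b i)) / 2))).
    rewrite sumT_scal; auto; ring. intros; ring.
  - apply sumT_le; auto. intros i; specialize (Hpt i); apply Rabs_le_inv in Hpt; lra.
    apply l2_prod; auto.
Qed.

Lemma nn_plus_le a b : l2c a -> l2c b -> nn (fun i => a i + b i) <= 2 * nn a + 2 * nn b.
Proof. intros Ha Hb. unfold nn. rewrite <- !sumT_scal, <- sumT_plus; auto.
  apply sumT_le. intros i. assert (0 <= (a i - b i)*(a i - b i)) by apply sq_nonneg'. nra.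
  apply l2_plus; auto. apply Summable_plus; apply Summable_scal; auto.
  all: apply Summable_scal; auto. Qed.

Lemma nn_expand a b t : l2c a -> l2c b ->
  nn (fun i => a i - t * b i) = nn a - 2 * t * ip a b + t * t * nn b.
Proof. intros Ha Hb. unfold nn, ip.
  rewrite (sumT_ext _ (fun i => (a i * a i - (2 * t) * (a i * b i)) + (t*t) * (b i * b i))).
  rewrite sumT_plus, sumT_minus, !sumT_scal; summ. reflexivity.
  intros; ring. Qed.

Lemma ip_minus_l a a' b : l2c a -> l2c a' -> l2c b -> ip (fun i => a i - a' i) b = ip a b - ip a' b.
Proof. intros. unfold ip. rewrite <- sumT_minus; try apply l2_prod; auto.
  apply sumT_ext; intros; ring. Qed.

Lemma parallelogram a b : l2c a -> l2c b ->
  nn (fun i => a i - b i) = 2 * nn a + 2 * nn b - 4 * nn (fun i => (a i + b i) / 2).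
Proof. intros Ha Hb. unfold nn.
  assert (Sp : Summable (fun i => (a i + b i) * (a i + b i))) by (apply l2_plus; auto).
  rewrite (sumT_ext (fun i => (a i + b i) / 2 * ((a i + b i) / 2))
     (fun i => /4 * ((a i + b i) * (a i + b i)))) by (intros; field).
  rewrite (sumT_ext (fun i => (a i - b i) * (a i - b i))
     (fun i => (2 * (a i * a i) + 2 * (b i * b i)) - ((a i + b i) * (a i + b i)))) by (intros; ring).
  rewrite sumT_minus, sumT_plus, !sumT_scal; summ. field.
Qed.

Lemma sumL_cv (F : nat -> I -> R) (G : I -> R) l :
  (forall i, Un_cv (fun n => F n i) (G i)) -> Un_cv (fun n => sumL (F n) l) (sumL G l).
Proof. intros H. induction l; simpl. intros e He; exists 0%nat; intros; unfold Rdist; rewrite Rminus_0_r, Rabs_R0; auto.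
  apply CV_plus; auto. Qed.

Lemma l2_complete (A : nat -> I -> R) :
  (forall n, l2c (A n)) ->
  (forall eps, 0 < eps -> exists N, forall n k, (N <= n)%nat -> (N <= k)%nat ->
     nn (fun i => A n i - A k i) <= eps) ->
  exists Z : I -> R, l2c Z /\ (forall i, Un_cv (fun n => A n i) (Z i)) /\
    (forall eps, 0 < eps -> exists N, forall n, (N <= n)%nat -> nn (fun i => A n i - Z i) <= eps).
Proof.
  intros Hl2 HC.
  assert (Hpt : forall i, exists z, Un_cv (fun n => A n i) z).
  { intros i. destruct (R_complete (fun n => A n i)) as [z Hz]; [|eauto].
    intros eps He. destruct (HC (eps*eps/2)) as [N HN]. nra. exists N. intros n k Hn Hk.
    specialize (HN n k Hn Hk). pose proof (coord_le (fun i => A n i - A k i) i).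
    assert (l2c (fun i => A n i - A k i)) by (apply l2_minus; auto).
    specialize (H H0). unfold Rdist. apply Rsqr_incrst_0; try lra. unfold Rsqr. rewrite <- Rabs_mult.
    rewrite Rabs_right. nra. apply Rle_ge, sq_nonneg'. apply Rabs_pos. }
  set (Z := fun i => proj1_sig (constructive_indefinite_description _ (Hpt i))).
  assert (HZ : forall i, Un_cv (fun n => A n i) (Z i)).
  { intros i; unfold Z; destruct constructive_indefinite_description; auto. }
  assert (Hbnd : forall eps, 0 < eps -> exists N, forall n, (N <= n)%nat ->
      exists s, HS (fun i => (A n i - Z i) * (A n i - Z i)) s /\ s <= eps).
  { intros eps He. destruct (HC eps He) as [N HN]. exists N. intros n Hn.
    apply HS_nonneg_bound. intros; apply sq_nonneg'.
    intros l Hl.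
    assert (Hcv : Un_cv (fun k => sumL (fun i => (A n i - A k i) * (A n i - A k i)) l)
                        (sumL (fun i => (A n i - Z i) * (A n i - Z i)) l)).
    { apply (sumL_cv (fun k i => (A n i - A k i) * (A n i - A k i))). intros i.
      apply CV_mult; apply CV_minus; auto; intros e He'; exists 0%nat; intros; unfold Rdist;
      rewrite Rminus_eq_0, Rabs_R0; auto. }
    apply Rnot_lt_le; intro Hlt.
    destruct (Hcv (sumL (fun i => (A n i - Z i) * (A n i - Z i)) l - eps)) as [K HK]. lra.
    specialize (HK (max K N) (Nat.le_max_l _ _)). specialize (HN n (max K N) Hn (Nat.le_max_r _ _)).
    assert (sumL (fun i => (A n i - A (max K N) i) * (A n i - A (max K N) i)) l <= eps).
    { eapply Rle_trans; [|exact HN]. apply HS_nonneg_le; auto. intros; apply sq_nonneg'.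
      apply sumT_spec. apply l2_minus; auto. }
    unfold Rdist in HK. apply Rabs_def2 in HK. lra. }
  assert (HZl2 : l2c Z).
  { destruct (Hbnd 1) as [N HN]; [lra|]. destruct (HN N (le_n _)) as [s [Hs _]].
    apply l2_ext with (fun i => A N i - (A N i - Z i)). intros; ring.
    apply l2_minus; auto. exists s; auto. }
  exists Z; split; [auto|split; auto].
  intros eps He. destruct (Hbnd eps He) as [N HN]. exists N; intros n Hn.
  destruct (HN n Hn) as [s [Hs Hse]]. unfold nn. rewrite (sumT_eq _ s Hs); auto.
Qed.
End L2.


Lemma abs_sqrt (x : R) : Rabs x = sqrt (x * x).
Proof. rewrite <- sqrt_Rsqr_abs; reflexivity. Qed.

Section BV.
Context (V : Type) (b : V -> V -> R) (Hb_nonneg : forall x y, 0 <= b x y).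

Lemma lip_edge (g : V -> R) eps x z : 0 <= eps -> 0 < b x z ->
  b x z * ((g x - g z) * (g x - g z)) <= eps -> Rabs (g x - g z) <= sqrt eps * / sqrt (b x z).
Proof.
  intros He Hb H. pose proof (sqrt_lt_R0 _ Hb) as Hs.
  assert (Rabs (g x - g z) * sqrt (b x z) <= sqrt eps).
  { rewrite abs_sqrt, <- sqrt_mult; try lra. apply sqrt_le_1_alt. lra. apply sq_nonneg'. }
  apply Rmult_le_reg_r with (sqrt (b x z)); auto.
  rewrite Rmult_assoc, Rinv_l; lra.
Qed.

Lemma lip_path (g : V -> R) eps : 0 <= eps ->
  (forall x y, b x y * ((g x - g y) * (g x - g y)) <= eps) ->
  forall x l y, is_path V b x l y -> Rabs (g x - g y) <= sqrt eps * path_length V b x l.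
Proof.
  intros He Hg x l y P. induction P; simpl.
  - rewrite Rminus_diag, Rabs_R0; lra.
  - replace (g x - g y) with ((g x - g z) + (g z - g y)) by ring.
    eapply Rle_trans. apply Rabs_triang. rewrite Rmult_plus_distr_l.
    apply Rplus_le_compat; auto. apply lip_edge; auto.
Qed.

Lemma lip_dist (g : V -> R) eps x y r : 0 <= eps ->
  (forall x y, b x y * ((g x - g y) * (g x - g y)) <= eps) ->
  dist_le V b x y r -> Rabs (g x - g y) <= sqrt eps * (r + 1).
Proof.
  intros He Hg Hd. destruct (Hd 1) as [l [P Hl]]; [lra|].
  eapply Rle_trans. apply lip_path; eauto. apply Rmult_le_compat_l. apply sqrt_pos. lra.
Qed.

Lemma eventually_out (xs : nat -> V) : d_cauchy V b xs -> ~ (exists x, d_converges_to V b xs x) ->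
  forall l, exists M, forall n, (M <= n)%nat -> ~ In (xs n) l.
Proof.
  intros HC HN l. induction l as [|x l IH].
  - exists 0%nat; intros n _ [].
  - destruct IH as [M HM].
    assert (exists M', forall n, (M' <= n)%nat -> xs n <> x).
    { apply NNPP; intro Hn. apply HN. exists x. intros eps He.
      destruct (HC eps He) as [N HNc]. exists N. intros n Hn'.
      apply NNPP; intro Hd. apply Hn. exists N. intros k Hk Hkx.
      apply Hd. rewrite <- Hkx. apply HNc; auto. }
    destruct H as [M' HM']. exists (max M M'). intros n Hn [E|E].
    + apply (HM' n); auto. lia.
    + apply (HM n); auto. lia.
Qed.

Lemma BV0 (xs : nat -> V) (phi : nat -> V -> R) (u : V -> R) :
  d_cauchy V b xs -> ~ (exists x, d_converges_to V b xs x) ->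
  (forall n, exists l, forall x, ~ In x l -> phi n x = 0) ->
  (forall x, Un_cv (fun n => phi n x) (u x)) ->
  (forall eps, 0 < eps -> exists N, forall n k, (N <= n)%nat -> (N <= k)%nat -> forall x y,
      b x y * (((phi n x - phi k x) - (phi n y - phi k y)) * ((phi n x - phi k x) - (phi n y - phi k y))) <= eps) ->
  Un_cv (fun n => u (xs n)) 0.
Proof.
  intros HC HN Hsupp Hcv Hedge eta Heta.
  set (q := eta / 5).
  destruct (HC 1) as [N1 HN1]; [lra|].
  set (y0 := xs N1).
  set (eps := (q/2) * (q/2)).
  assert (Heps : 0 < eps) by (unfold eps, q; nra).
  destruct (Hedge eps Heps) as [N2 HN2].
  destruct (Hcv y0 q) as [N3 HN3]. unfold q; lra.
  set (Nn := max N2 N3).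
  destruct (Hsupp Nn) as [L HL].
  destruct (eventually_out xs HC HN L) as [M HM].
  exists (max M N1). intros n Hn. unfold Rdist; rewrite Rminus_0_r.
  destruct (Hcv (xs n) q) as [K1 HK1]. unfold q; lra.
  set (k := max (max K1 N3) Nn).
  set (g := fun x => phi Nn x - phi k x).
  assert (Hg : Rabs (g (xs n) - g y0) <= q).
  { eapply Rle_trans. apply (lip_dist g eps (xs n) y0 1). lra.
    intros x y; apply HN2; unfold Nn, k; lia.
    apply HN1; unfold y0; lia.
    unfold eps. rewrite sqrt_square. lra. unfold q; lra. }
  assert (H0 : phi Nn (xs n) = 0) by (apply HL, HM; lia).
  assert (A1 : Rabs (phi k (xs n) - u (xs n)) < q) by (apply HK1; unfold k; lia).
  assert (A2 : Rabs (phi Nn y0 - u y0) < q) by (apply HN3; unfold Nn; lia).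
  assert (A3 : Rabs (phi k y0 - u y0) < q) by (apply HN3; unfold k, Nn; lia).
  unfold g in Hg. rewrite H0 in Hg.
  apply Rabs_def2 in A1; apply Rabs_def2 in A2; apply Rabs_def2 in A3.
  apply Rabs_le_inv in Hg. apply Rabs_def1; unfold q in *; lra.
Qed.
End BV.


Lemma fst_Csum {I} (F : I -> Cplx) l : fst (Csum F l) = sumL (fun i => fst (F i)) l.
Proof. induction l; simpl; auto. rewrite IHl; auto. Qed.
Lemma snd_Csum {I} (F : I -> Cplx) l : snd (Csum F l) = sumL (fun i => snd (F i)) l.
Proof. induction l; simpl; auto. rewrite IHl; auto. Qed.

Lemma Cnorm2_nonneg w : 0 <= Cnorm2 w.
Proof. unfold Cnorm2. pose proof (sq_nonneg' (fst w)); pose proof (sq_nonneg' (snd w)); lra. Qed.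
Lemma Cnorm_fst w : Rabs (fst w) <= Cnorm w.
Proof. unfold Cnorm, Cnorm2. rewrite abs_sqrt. apply sqrt_le_1_alt. pose proof (sq_nonneg' (snd w)); lra. Qed.
Lemma Cnorm_snd w : Rabs (snd w) <= Cnorm w.
Proof. unfold Cnorm, Cnorm2. rewrite abs_sqrt. apply sqrt_le_1_alt. pose proof (sq_nonneg' (fst w)); lra. Qed.
Lemma Cnorm_le w : Cnorm w <= Rabs (fst w) + Rabs (snd w).
Proof. unfold Cnorm, Cnorm2. pose proof (Rabs_pos (fst w)); pose proof (Rabs_pos (snd w)).
  rewrite <- (sqrt_square (Rabs (fst w) + Rabs (snd w))) by lra.
  apply sqrt_le_1_alt.
  assert (Rabs (fst w) * Rabs (fst w) = fst w * fst w) by (rewrite <- Rabs_mult; apply Rabs_right, Rle_ge, sq_nonneg').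
  assert (Rabs (snd w) * Rabs (snd w) = snd w * snd w) by (rewrite <- Rabs_mult; apply Rabs_right, Rle_ge, sq_nonneg').
  nra.
Qed.

Lemma HasSumC_iff {I} (F : I -> Cplx) z :
  HasSumC F z <-> HS (fun i => fst (F i)) (fst z) /\ HS (fun i => snd (F i)) (snd z).
Proof.
  split.
  - intros H; split; intros eps He; destruct (H eps He) as [l0 Hl0]; exists l0; intros l Hl Hi;
    specialize (Hl0 l Hl Hi); eapply Rle_lt_trans; try exact Hl0.
    + pose proof (Cnorm_fst (Csub (Csum F l) z)) as Q. simpl in Q. rewrite fst_Csum in Q. exact Q.
    + pose proof (Cnorm_snd (Csub (Csum F l) z)) as Q. simpl in Q. rewrite snd_Csum in Q. exact Q.
  - intros [H1 H2] eps He. destruct (H1 (eps/2)) as [l1 L1]; [lra|]. destruct (H2 (eps/2)) as [l2 L2]; [lra|].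
    exists (l1 ++ l2). intros l Hl Hi.
    assert (incl l1 l) by (intros x Hx; apply Hi, in_or_app; auto).
    assert (incl l2 l) by (intros x Hx; apply Hi, in_or_app; auto).
    specialize (L1 l Hl H). specialize (L2 l Hl H0).
    eapply Rle_lt_trans. apply Cnorm_le. simpl. rewrite fst_Csum, snd_Csum. unfold Rminus in *. lra.
Qed.

Lemma HasSumR_iff {I} (f : I -> R) s : HasSumR f s <-> HS f s.
Proof. unfold HasSumR. rewrite HasSumC_iff. simpl. split. intros [H _]; auto.
  intros H; split; auto. apply HS_zero. Qed.

Definition comp (k : bool) (z : Cplx) : R := if k then fst z else snd z.
Lemma comp_sub k a w : comp k (Csub a w) = comp k a - comp k w.
Proof. destruct k; simpl; ring. Qed.
Lemma comp_add k a w : comp k (Cadd a w) = comp k a + comp k w.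
Proof. destruct k; simpl; ring. Qed.
Lemma comp_scale k r a : comp k (Cscale r a) = r * comp k a.
Proof. destruct k; simpl; ring. Qed.
Lemma comp_sq k w : comp k w * comp k w <= Cnorm2 w.
Proof. unfold Cnorm2; destruct k; simpl; pose proof (sq_nonneg' (fst w)); pose proof (sq_nonneg' (snd w)); lra. Qed.
Lemma comp_abs k w : Rabs (comp k w) <= Cnorm w.
Proof. destruct k; simpl; [apply Cnorm_fst|apply Cnorm_snd]. Qed.
Lemma comp_C0 k : comp k C0 = 0. Proof. destruct k; reflexivity. Qed.
Lemma comp_HasSumC {I} k (F : I -> Cplx) z : HasSumC F z -> HS (fun i => comp k (F i)) (comp k z).
Proof. rewrite HasSumC_iff; intros [H1 H2]; destruct k; auto. Qed.

Lemma nonzero_comp z : z <> C0 -> exists k, comp k z <> 0.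
Proof. intros H. destruct z as [x y]. destruct (Req_dec x 0).
  destruct (Req_dec y 0). subst; exfalso; apply H; reflexivity.
  exists false; auto. exists true; auto. Qed.

Section Part1.
Context (V : Type) (m : V -> R) (Hm : forall x, 0 < m x) (b : V -> V -> R) (c : V -> R)
  (Hb_nonneg : forall x y, 0 <= b x y) (Hc : forall x, 0 <= c x).

Lemma l2cv_pointwise k (us : nat -> V -> Cplx) u :
  l2_converges_to V m us u -> forall x, Un_cv (fun n => comp k (us n x)) (comp k (u x)).
Proof.
  intros H x eta He. pose proof (Hm x).
  destruct (H (eta * eta * m x / 2)) as [N HN].
  { apply Rmult_lt_0_compat; [|lra]. apply Rmult_lt_0_compat; nra. }
  exists N. intros n Hn. destruct (HN n Hn) as [s [Hs Hse]].
  apply HasSumR_iff in Hs.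
  pose proof (HS_term_le _ s x (fun i => Rmult_le_pos _ _ (Cnorm2_nonneg _) (Rlt_le _ _ (Hm i))) Hs).
  simpl in H1. pose proof (comp_sq k (Csub (us n x) (u x))). rewrite comp_sub in H2.
  unfold Rdist. rewrite abs_sqrt. rewrite <- (sqrt_square eta) by lra.
  apply sqrt_lt_1_alt. split. apply sq_nonneg'.
  apply Rmult_lt_reg_r with (m x); auto.
  assert (Cnorm2 (Csub (us n x) (u x)) * m x <= eta * eta * m x / 2) by lra.
  assert (0 < eta * eta * m x) by (apply Rmult_lt_0_compat; nra).
  nra.
Qed.

Lemma energy_edge u s x y : energy_is V b c u s ->
  b x y * Cnorm2 (Csub (u x) (u y)) <= 2 * s.
Proof.
  intros [s1 [s2 [H1 [H2 ->]]]]. apply HasSumR_iff in H1. apply HasSumR_iff in H2.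
  pose proof (HS_term_le _ s1 (x, y) (fun p => Rmult_le_pos _ _ (Hb_nonneg _ _) (Cnorm2_nonneg _)) H1).
  pose proof (HS_nonneg_pos _ s2 (fun p => Rmult_le_pos _ _ (Hc _) (Cnorm2_nonneg _)) H2).
  simpl in H. lra.
Qed.

Lemma approx_bv (phis : nat -> V -> Cplx) (u : V -> Cplx) (xs : nat -> V) k :
  approx_seq V m b c phis u -> d_cauchy V b xs -> ~ (exists x, d_converges_to V b xs x) ->
  Un_cv (fun n => comp k (u (xs n))) 0.
Proof.
  intros [Hcc [Hcv Hen]] HC HN.
  apply (BV0 V b xs (fun n x => comp k (phis n x)) (fun x => comp k (u x))); auto.
  - intros n. destruct (Hcc n) as [l Hl]. exists l. intros x Hx. rewrite Hl; auto. apply comp_C0.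
  - intros x. apply l2cv_pointwise; auto.
  - intros eps He. destruct (Hen (eps/2)) as [N HN']; [lra|]. exists N. intros n k' Hn Hk x y.
    destruct (HN' n k' Hn Hk) as [s [Hs Hse]].
    pose proof (energy_edge _ _ x y Hs). simpl in H.
    pose proof (comp_sq k (Csub (Csub (phis n x) (phis k' x)) (Csub (phis n y) (phis k' y)))).
    rewrite !comp_sub in H0. pose proof (Hb_nonneg x y).
    eapply Rle_trans. apply Rmult_le_compat_l. auto. exact H0. lra.
Qed.

Lemma C_cv_comp k (zs : nat -> Cplx) z : C_converges_to zs z -> Un_cv (fun n => comp k (zs n)) (comp k z).
Proof. intros H eps He. destruct (H eps He) as [N HN]. exists N; intros n Hn.
  unfold Rdist. rewrite <- comp_sub. eapply Rle_lt_trans. apply comp_abs. apply HN; auto. Qed.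

Lemma part1 f : DQN V m b c f -> boundary_value_nonzero V b f -> ~ DQD V m b c f.
Proof.
  intros _ [xs [HC [HN [z [Hz Hfz]]]]] [_ [phis Hap]].
  destruct (nonzero_comp z Hz) as [k Hk].
  pose proof (approx_bv phis f xs k Hap HC HN).
  pose proof (C_cv_comp k _ _ Hfz). apply Hk. eapply UL_sequence; eauto.
Qed.
End Part1.


Ltac summ := repeat first [assumption | apply l2_prod; assumption | apply Summable_plus | apply Summable_minus | apply Summable_scal | apply Summable_opp ].

Lemma nn_sym {I} (a b : I -> R) : nn (fun i => a i - b i) = nn (fun i => b i - a i).
Proof. unfold nn; apply sumT_ext; intros; ring. Qed.

Lemma nn_ext {I} (a b : I -> R) : (forall i, a i = b i) -> nn a = nn b.
Proof. intros E; unfold nn; apply sumT_ext; intros i; rewrite E; auto. Qed.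

Lemma LIM0 {I} (X H : I -> R) (Y : nat -> I -> R) :
  l2c X -> l2c H -> (forall n, l2c (Y n)) -> (forall n, ip (Y n) H = 0) ->
  (forall eps, 0 < eps -> exists N, forall n, (N <= n)%nat -> nn (fun i => X i - Y n i) <= eps) ->
  ip X H = 0.
Proof.
  intros HX HH HY H0 Hcv. cut (Rabs (ip X H) <= 0). intros Q; apply Rabs_le_inv in Q; lra.
  apply Rnot_lt_le; intro Hp. set (e := Rabs (ip X H)).
  set (lam := (nn H + 1) / e).
  assert (He : 0 < e) by exact Hp.
  assert (Hlam : 0 < lam).
  { unfold lam. pose proof (nn_nonneg H). apply Rdiv_lt_0_compat. lra. exact He. }
  destruct (Hcv (e / lam / 2)) as [N HN]. apply Rdiv_lt_0_compat; [apply Rdiv_lt_0_compat|]; auto; lra.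
  specialize (HN N (le_n _)).
  assert (E : ip X H = ip (fun i => X i - Y N i) H) by (rewrite ip_minus_l, H0; auto; ring).
  pose proof (ip_bound (fun i => X i - Y N i) H lam Hlam (l2_minus _ _ HX (HY N)) HH).
  rewrite <- E in H1. fold e in H1.
  assert (lam * nn (fun i => X i - Y N i) <= e / 2).
  { apply Rle_trans with (lam * (e / lam / 2)). apply Rmult_le_compat_l; lra. right; field; lra. }
  assert (nn H / lam < e).
  { unfold lam. replace (nn H / ((nn H + 1) / e)) with (nn H * e / (nn H + 1)) by (field; pose proof (nn_nonneg H); lra).
    apply Rmult_lt_reg_r with (nn H + 1). pose proof (nn_nonneg H); lra.
    replace (nn H * e / (nn H + 1) * (nn H + 1)) with (nn H * e) by (field; pose proof (nn_nonneg H); lra). nra. }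
  lra.
Qed.

Lemma FIN {I} (H : I -> R) (Ps Om : nat -> I -> R) :
  l2c H -> 0 < nn H -> (forall n, l2c (Ps n)) -> (forall n, l2c (Om n)) ->
  (forall eps, 0 < eps -> exists N, forall n, (N <= n)%nat -> nn (fun i => Ps n i - H i) <= eps) ->
  (forall eps, 0 < eps -> exists N, forall n, (N <= n)%nat -> nn (fun i => Om n i - - H i) <= eps) ->
  (forall n, nn (Ps n) <= ip (fun i => Om n i + Ps n i) (Ps n)) -> False.
Proof.
  intros HH Hpos HP HO CP CO Hineq.
  destruct (CP (nn H / 20)) as [N1 H1]; [lra|]. destruct (CO (nn H / 20)) as [N2 H2]; [lra|].
  set (n := max N1 N2). specialize (H1 n (Nat.le_max_l _ _)). specialize (H2 n (Nat.le_max_r _ _)).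
  specialize (Hineq n).
  pose proof (ip_bound (fun i => Om n i + Ps n i) (Ps n) 1 Rlt_0_1 (l2_plus _ _ (HO n) (HP n)) (HP n)).
  apply Rabs_le_inv in H0. rewrite Rdiv_1_r, Rmult_1_l in H0.
  assert (A : nn (fun i => Om n i + Ps n i) <= 2 * nn (fun i => Om n i - - H i) + 2 * nn (fun i => Ps n i - H i)).
  { rewrite (nn_ext (fun i => Om n i + Ps n i) (fun i => (Om n i - - H i) + (Ps n i - H i))) by (intros; ring).
    apply nn_plus_le; apply l2_minus; auto. apply l2_ext with (fun i => -1 * H i). intros; ring. apply l2_scal; auto. }
  assert (B : nn H <= 2 * nn (Ps n) + 2 * nn (fun i => H i - Ps n i)).
  { rewrite (nn_ext H (fun i => Ps n i + (H i - Ps n i))) at 1 by (intros; ring).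
    apply nn_plus_le; auto. apply l2_minus; auto. }
  rewrite nn_sym in B. lra.
Qed.

Section Part2a.
Context (V : Type) (m : V -> R) (Hm : forall x, 0 < m x) (b : V -> V -> R) (c : V -> R)
  (Hb_nonneg : forall x y, 0 <= b x y) (Hb_diag : forall x, b x x = 0)
  (Hb_sym : forall x y, b x y = b y x) (Hb_sum : forall x, exists s, HS (fun y => b x y) s)
  (Hc : forall x, 0 <= c x).

Definition Idx := ((V * V) + V)%type.
Definition J (g : V -> R) (i : Idx) : R :=
  match i with
  | inl p => sqrt (b (fst p) (snd p) / 2) * (g (fst p) - g (snd p))
  | inr x => sqrt (c x + m x) * g x
  end.
Definition dlt (x : V) : V -> R := fun y => if deq y x then 1 else 0.
Definition CcR (g : V -> R) := exists l, forall x, ~ In x l -> g x = 0.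

Lemma cm_pos x : 0 < c x + m x. Proof. pose proof (Hc x); pose proof (Hm x); lra. Qed.

Lemma J_lin g h t i : J (fun y => g y + t * h y) i = J g i + t * J h i.
Proof. destruct i; simpl; ring. Qed.
Lemma J_sq_inl g p : J g (inl p) * J g (inl p) =
   / 2 * (b (fst p) (snd p) * ((g (fst p) - g (snd p)) * (g (fst p) - g (snd p)))).
Proof. simpl. replace (sqrt (b (fst p) (snd p) / 2) * (g (fst p) - g (snd p)) *
   (sqrt (b (fst p) (snd p) / 2) * (g (fst p) - g (snd p)))) with
   ((sqrt (b (fst p) (snd p) / 2) * sqrt (b (fst p) (snd p) / 2)) * ((g (fst p) - g (snd p)) * (g (fst p) - g (snd p)))) by ring.
  rewrite sqrt_sqrt. field. pose proof (Hb_nonneg (fst p) (snd p)); lra. Qed.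
Lemma J_sq_inr g x : J g (inr x) * J g (inr x) = (c x + m x) * (g x * g x).
Proof. simpl. replace (sqrt (c x + m x) * g x * (sqrt (c x + m x) * g x)) with
  ((sqrt (c x + m x) * sqrt (c x + m x)) * (g x * g x)) by ring.
  rewrite sqrt_sqrt; auto. pose proof (cm_pos x); lra. Qed.

Lemma inl_inj : forall (x y : V * V), (inl x : Idx) = inl y -> x = y.
Proof. intros x y H; inversion H; auto. Qed.
Lemma inr_inj : forall (x y : V), (inr x : Idx) = inr y -> x = y.
Proof. intros x y H; inversion H; auto. Qed.

Lemma J_l2 g s1 s2 :
  HS (fun p : V * V => b (fst p) (snd p) * ((g (fst p) - g (snd p)) * (g (fst p) - g (snd p)))) s1 ->
  HS (fun x => (c x + m x) * (g x * g x)) s2 -> l2c (J g).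
Proof.
  intros H1 H2.
  set (F1 := fun i : Idx => match i with inl p => / 2 * (b (fst p) (snd p) * ((g (fst p) - g (snd p)) * (g (fst p) - g (snd p)))) | inr _ => 0 end).
  set (F2 := fun i : Idx => match i with inl _ => 0 | inr x => (c x + m x) * (g x * g x) end).
  assert (HS F1 (/2 * s1)).
  { apply (HS_reindex inl inl_inj (fun p => / 2 * (b (fst p) (snd p) * ((g (fst p) - g (snd p)) * (g (fst p) - g (snd p)))))).
    apply HS_scal; auto. intros; reflexivity.
    intros [p|x] Hn; simpl; auto. exfalso; apply Hn; eauto. }
  assert (HS F2 s2).
  { apply (HS_reindex inr inr_inj (fun x => (c x + m x) * (g x * g x))); auto.
    intros [p|x] Hn; simpl; auto. exfalso; apply Hn; eauto. }
  exists (/2 * s1 + s2). eapply HS_ext; [|apply HS_plus; [exact H|exact H0]].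
  intros [p|x]; unfold F1, F2. rewrite J_sq_inl; ring. rewrite J_sq_inr; ring.
Qed.

Lemma J_zero i : J (fun _ => 0) i = 0.
Proof. destruct i; simpl; ring. Qed.

Lemma dlt_l2 x : l2c (J (dlt x)).
Proof.
  destruct (Hb_sum x) as [B HB].
  set (F1 := fun p : V * V => if deq (fst p) x then / 2 * b (fst p) (snd p) else 0).
  set (F2 := fun p : V * V => if deq (snd p) x then / 2 * b (fst p) (snd p) else 0).
  assert (A1 : HS F1 (/2 * B)).
  { apply (HS_reindex (fun q => (x, q)) (fun q q' H => f_equal snd H) (fun q => /2 * b x q)).
    apply HS_scal; auto. intros q; unfold F1; simpl; destruct (deq x x); [auto|congruence].
    intros [p q] Hn; unfold F1; simpl. destruct (deq p x); auto. subst; exfalso; apply Hn; eauto. }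
  assert (A2 : HS F2 (/2 * B)).
  { apply (HS_reindex (fun p => (p, x)) (fun q q' H => f_equal fst H) (fun q => /2 * b x q)).
    apply HS_scal; auto. intros q; unfold F2; simpl; destruct (deq x x); [|congruence]. rewrite Hb_sym; auto.
    intros [p q] Hn; unfold F2; simpl. destruct (deq q x); auto. subst; exfalso; apply Hn; eauto. }
  apply (J_l2 (dlt x) (2 * (/2 * B) + 2 * (/2 * B)) (c x + m x)).
  - apply HS_scal with (a := 2) in A1. apply HS_scal with (a := 2) in A2.
    eapply HS_ext; [|apply HS_plus; [exact A1|exact A2]].
    intros [p q]; unfold F1, F2, dlt; simpl.
    destruct (deq p x); destruct (deq q x); subst; try rewrite Hb_diag; field.
  - replace (c x + m x) with (sumL (fun y => (c y + m y) * (dlt x y * dlt x y)) [x]).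
    apply HS_finite. constructor; auto; constructor.
    intros y Hy. unfold dlt. destruct (deq y x). subst; exfalso; apply Hy; left; auto. ring.
    simpl. unfold dlt; destruct (deq x x); [ring|congruence].
Qed.

Lemma CcR_l2 g : CcR g -> l2c (J g).
Proof.
  intros [l Hl]. revert g Hl. induction l as [|x0 l IH]; intros g Hl.
  - apply l2_ext with (fun _ => 0). intros i. rewrite <- (J_zero i). destruct i; simpl;
    rewrite !Hl; auto. exists 0. eapply HS_ext; [|apply HS_zero]. intros; simpl; ring.
  - set (g' := fun y => if deq y x0 then 0 else g y).
    assert (l2c (J g')). { apply IH. intros y Hy. unfold g'. destruct (deq y x0); auto.
      apply Hl. intros [E|E]; auto. }
    apply l2_ext with (fun i => J g' i + g x0 * J (dlt x0) i).
    intros i. rewrite <- J_lin. destruct i as [[p q]|y]; simpl; unfold g', dlt;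
    repeat destruct (deq _ x0); subst; ring.
    apply l2_plus; auto. apply l2_scal, dlt_l2.
Qed.

Lemma K_lemma g x : l2c (J g) ->
  exists S, HS (fun y => b x y * (g x - g y)) S /\ ip (J g) (J (dlt x)) = S + (c x + m x) * g x.
Proof.
  intros Hg.
  set (G := fun y => / 2 * (b x y * (g x - g y))).
  assert (HsG : Summable G).
  { destruct (HS_restrict (fun y => inl (x, y) : Idx) (fun q q' H => f_equal snd (inl_inj _ _ H))
      (fun i => J g i * J g i) (sumT (fun i => J g i * J g i))) as [t [Ht _]].
    intros; apply sq_nonneg'. apply sumT_spec; auto.
    destruct (Hb_sum x) as [B HB].
    apply Summable_abs with (fun y => /4 * b x y + / 2 * (J g (inl (x,y)) * J g (inl (x, y)))).
    intros y. rewrite J_sq_inl. simpl. unfold G. pose proof (Hb_nonneg x y).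
    assert (Rabs (g x - g y) <= (1 + (g x - g y) * (g x - g y)) / 2).
    { pose proof (sq_nonneg' (Rabs (g x - g y) - 1)).
      assert (Rabs (g x - g y) * Rabs (g x - g y) = (g x - g y) * (g x - g y)) by
        (rewrite <- Rabs_mult; apply Rabs_right, Rle_ge, sq_nonneg').
      nra. }
    assert (E1 : Rabs (/2) = /2) by (apply Rabs_right; lra).
    assert (E2 : Rabs (b x y) = b x y) by (apply Rabs_right; lra).
    rewrite Rabs_mult, Rabs_mult, E1, E2. nra.
    apply Summable_plus; apply Summable_scal. exists B; auto. exists t; auto. }
  destruct HsG as [sg Hsg].
  set (P1 := fun i : Idx => match i with inl p => if deq (fst p) x then G (snd p) else 0 | inr _ => 0 end).
  set (P2 := fun i : Idx => match i with inl p => if deq (snd p) x then G (fst p) else 0 | inr _ => 0 end).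
  set (P3 := fun i : Idx => match i with inl _ => 0 | inr y => if deq y x then (c x + m x) * g x else 0 end).
  assert (A1 : HS P1 sg).
  { apply (HS_reindex (fun q => inl (x, q) : Idx) (fun q q' H => f_equal snd (inl_inj _ _ H)) G); auto.
    intros q; simpl; destruct (deq x x); [auto|congruence].
    intros [[p q]|y] Hn; simpl; auto. destruct (deq p x); auto. subst; exfalso; apply Hn; eauto. }
  assert (A2 : HS P2 sg).
  { apply (HS_reindex (fun p => inl (p, x) : Idx) (fun q q' H => f_equal fst (inl_inj _ _ H)) G); auto.
    intros q; simpl; destruct (deq x x); [auto|congruence].
    intros [[p q]|y] Hn; simpl; auto. destruct (deq q x); auto. subst; exfalso; apply Hn; eauto. }
  assert (A3 : HS P3 ((c x + m x) * g x)).
  { apply (HS_reindex (fun (_ : unit) => inr x : Idx) (fun u u' _ => match u, u' with tt, tt => eq_refl end) (fun _ => (c x + m x) * g x)).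
    assert (Q : HS (fun _ : unit => (c x + m x) * g x) (sumL (fun _ : unit => (c x + m x) * g x) [tt])).
    { apply HS_finite. constructor; auto; constructor. intros []; simpl; intuition. }
    simpl in Q; rewrite Rplus_0_r in Q; exact Q.
    intros; simpl; destruct (deq x x); [auto|congruence].
    intros [[p q]|y] Hn; simpl; auto. destruct (deq y x); auto. subst; exfalso; apply Hn; exists tt; auto. }
  exists (2 * sg). split.
  - replace (2 * sg) with (2 * sg) by ring. eapply HS_ext; [|apply (HS_scal 2); exact Hsg].
    intros y; unfold G; field.
  - unfold ip. apply sumT_eq. replace (2 * sg + (c x + m x) * g x) with (sg + sg + (c x + m x) * g x) by ring.
    eapply HS_ext; [|apply HS_plus; [apply HS_plus; [exact A1|exact A2]|exact A3]].
    intros [[p q]|y]; unfold P1, P2, P3, G, dlt; simpl.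
    + replace (sqrt (b p q / 2) * (g p - g q) * (sqrt (b p q / 2) * ((if deq p x then 1 else 0) - (if deq q x then 1 else 0))))
        with ((sqrt (b p q / 2) * sqrt (b p q / 2)) * ((g p - g q) * ((if deq p x then 1 else 0) - (if deq q x then 1 else 0)))) by ring.
      rewrite sqrt_sqrt by (pose proof (Hb_nonneg p q); lra).
      destruct (deq p x); destruct (deq q x); subst; try rewrite Hb_diag; try rewrite (Hb_sym p x); field.
    + destruct (deq y x); subst; [|ring].
      replace (sqrt (c x + m x) * g x * (sqrt (c x + m x) * 1)) with
        ((sqrt (c x + m x) * sqrt (c x + m x)) * g x) by ring.
      rewrite sqrt_sqrt by (pose proof (cm_pos x); lra). ring.
Qed.
Definition LT (psi om : V -> R) := forall x, exists s, HS (fun y => b x y * (psi x - psi y)) s /\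
   om x = / m x * (s + c x * psi x).
Definition sm (g : V -> R) : V -> R := fun x => sqrt (m x) * g x.

Lemma sm_sq g x : sm g x * sm g x = m x * (g x * g x).
Proof. unfold sm. replace (sqrt (m x) * g x * (sqrt (m x) * g x)) with ((sqrt (m x) * sqrt (m x)) * (g x * g x)) by ring.
  rewrite sqrt_sqrt; auto. pose proof (Hm x); lra. Qed.
Lemma sm_prod g h x : sm g x * sm h x = m x * g x * h x.
Proof. unfold sm. replace (sqrt (m x) * g x * (sqrt (m x) * h x)) with ((sqrt (m x) * sqrt (m x)) * (g x * h x)) by ring.
  rewrite sqrt_sqrt; [ring|]. pose proof (Hm x); lra. Qed.

Lemma CcR_ndup g : CcR g -> exists F, NoDup F /\ forall x, ~ In x F -> g x = 0.
Proof. intros [l Hl]. exists (ndup l). split. apply ndup_NoDup. intros x Hx; apply Hl.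
  intros H; apply Hx, ndup_In; auto. Qed.

Lemma decomp (psi : V -> R) F : NoDup F -> (forall x, ~ In x F -> psi x = 0) ->
  forall y, psi y = sumL (fun x => psi x * dlt x y) F.
Proof.
  intros HF H0 y. destruct (in_dec deq y F) as [Hy|Hy].
  - rewrite (sumL_support (fun x => psi x * dlt x y) [y] F); auto.
    simpl; unfold dlt; destruct (deq y y); [ring|congruence].
    constructor; auto; constructor. intros x [<-|[]]; auto.
    intros x Hx. unfold dlt. destruct (deq y x); [subst; exfalso; apply Hx; left; auto|ring].
  - rewrite H0; auto. symmetry. rewrite <- (sumL_zero F). apply sumL_ext. intros x Hx.
    unfold dlt. destruct (deq y x); [subst; contradiction|ring].
Qed.

Lemma J_sum (psi : V -> R) F i :
  J (fun y => sumL (fun x => psi x * dlt x y) F) i = sumL (fun x => psi x * J (dlt x) i) F.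
Proof. destruct i as [p|y]; simpl.
  - rewrite <- sumL_minus, <- sumL_scal. apply sumL_ext; intros; ring.
  - rewrite <- sumL_scal. apply sumL_ext; intros; ring.
Qed.

Lemma nn_J_ge_sm g : l2c (J g) -> l2c (sm g) /\ nn (sm g) <= nn (J g).
Proof.
  intros Hg. destruct (HS_restrict (fun x => inr x : Idx) inr_inj (fun i => J g i * J g i)
     (nn (J g))) as [t [Ht Htn]]. intros; apply sq_nonneg'. apply sumT_spec; auto.
  destruct (Summable_dom (fun x => sm g x * sm g x) (fun x => J g (inr x) * J g (inr x))) as [H1 H2].
  intros x. rewrite sm_sq, J_sq_inr; auto. pose proof (Hm x); pose proof (Hc x). split.
  apply Rmult_le_pos; [lra|apply sq_nonneg']. apply Rmult_le_compat_r; [apply sq_nonneg'|lra]. exists t; auto.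
  split; auto. unfold nn at 1. rewrite (sumT_eq (fun x => J g (inr x) * J g (inr x)) t Ht) in H2. lra.
Qed.

Lemma pos_lemma psi om : CcR psi -> LT psi om ->
  nn (sm psi) <= sumT (fun x => m x * (om x + psi x) * psi x).
Proof.
  intros Hcc Hlt. destruct (CcR_ndup _ Hcc) as [F [HF H0]].
  pose proof (CcR_l2 psi Hcc) as Hl2.
  assert (Hpt : forall x, m x * (om x + psi x) = ip (J psi) (J (dlt x))).
  { intros x. destruct (Hlt x) as [s [Hs Hom]].
    destruct (K_lemma psi x Hl2) as [S [HS1 HS2]].
    rewrite HS2, Hom. rewrite (HS_unique _ _ _ Hs HS1). field. pose proof (Hm x); lra. }
  rewrite (sumT_eq _ (sumL (fun x => m x * (om x + psi x) * psi x) F)).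
  2: { apply HS_finite; auto. intros x Hx; rewrite (H0 x Hx); ring. }
  rewrite (sumL_ext _ (fun x => psi x * ip (J psi) (J (dlt x)))).
  2: { intros x _. rewrite Hpt; ring. }
  assert (E : sumL (fun x => psi x * ip (J psi) (J (dlt x))) F = nn (J psi)).
  { symmetry. unfold nn. apply sumT_eq.
    eapply HS_ext; [|apply (HS_sumlist (fun x i => psi x * (J psi i * J (dlt x) i)))].
    - intros i. simpl.
      assert (Ef : (fun y => sumL (fun x => psi x * dlt x y) F) = psi).
      { apply functional_extensionality; intros y; symmetry; apply decomp; auto. }
      rewrite (sumL_ext (fun y => psi y * (J psi i * J (dlt y) i))
                       (fun y => J psi i * (psi y * J (dlt y) i))) by (intros; ring).
      rewrite sumL_scal, <- J_sum, Ef. reflexivity.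
    - intros y _. apply HS_scal. apply sumT_spec. apply l2_prod; auto. apply dlt_l2; auto. }
  rewrite E. apply nn_J_ge_sm; auto.
Qed.

Lemma Green psi om h :
  (forall y, exists S, HS (fun x => b y x * (h y - h x)) S /\ S + (c y + m y) * h y = 0) ->
  CcR psi -> LT psi om -> HS (fun x => m x * (om x + psi x) * h x) 0.
Proof.
  intros Hh Hcc Hlt. destruct (CcR_ndup _ Hcc) as [F [HF H0]].
  set (Bf := fun x => sumT (fun y => b x y)).
  assert (HB : forall x, HS (fun y => b x y) (Bf x)).
  { intros x; apply sumT_spec. destruct (Hb_sum x) as [s Hs]; exists s; auto. }
  set (Sh := fun y => sumT (fun x => b y x * (h y - h x))).
  assert (HSh : forall y, HS (fun x => b y x * (h y - h x)) (Sh y) /\ Sh y + (c y + m y) * h y = 0).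
  { intros y. destruct (Hh y) as [S [H1 H2]]. unfold Sh. rewrite (sumT_eq _ S H1). auto. }
  assert (Hpt : forall x, m x * (om x + psi x) * h x =
     (Bf x + c x + m x) * psi x * h x - sumL (fun y => psi y * (b y x * h x)) F).
  { intros x. destruct (Hlt x) as [s [Hs Hom]].
    assert (Es : s = psi x * Bf x - sumL (fun y => b x y * psi y) F).
    { eapply HS_unique; [exact Hs|]. eapply HS_ext; [|apply HS_minus; [apply HS_scal, HB|apply HS_finite]]; auto.
      intros y; simpl; ring. intros y Hy; rewrite (H0 y Hy); ring. }
    rewrite Hom, Es.
    rewrite (sumL_ext (fun y => psi y * (b y x * h x)) (fun y => h x * (b x y * psi y))).
    rewrite sumL_scal. field. pose proof (Hm x); lra.
    intros y _; rewrite (Hb_sym y x); ring. }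
  eapply HS_ext. intros x; symmetry; apply Hpt.
  replace 0 with (sumL (fun x => (Bf x + c x + m x) * psi x * h x) F -
     sumL (fun y => psi y * (h y * Bf y - Sh y)) F).
  apply HS_minus. apply HS_finite; auto. intros x Hx; rewrite (H0 x Hx); ring.
  apply (HS_sumlist (fun y x => psi y * (b y x * h x))). intros y _. apply HS_scal.
  eapply HS_ext; [|apply HS_minus; [apply HS_scal, HB|apply (proj1 (HSh y))]]. intros x; simpl; ring.
  rewrite <- sumL_minus. rewrite <- (sumL_zero F). apply sumL_ext. intros y _.
  pose proof (proj2 (HSh y)). replace ((Bf y + c y + m y) * psi y * h y - psi y * (h y * Bf y - Sh y))
    with (psi y * (Sh y + (c y + m y) * h y)) by ring. rewrite H; ring.
Qed.
Lemma inv_small eps : 0 < eps -> exists N, forall n, (N <= n)%nat -> / (INR n + 1) < eps.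
Proof. intros He. destruct (archimed_cor1 eps He) as [N [HN HN0]]. exists N. intros n Hn.
  apply le_INR in Hn. assert (0 < INR N) by (apply lt_0_INR; auto).
  eapply Rle_lt_trans; [|exact HN]. apply Rinv_le_contravar; lra. Qed.

Lemma CcR_lin g h t : CcR g -> CcR h -> CcR (fun y => g y + t * h y).
Proof. intros [l1 H1] [l2 H2]. exists (l1 ++ l2). intros x Hx.
  rewrite H1, H2. ring. intros H; apply Hx, in_or_app; auto. intros H; apply Hx, in_or_app; auto. Qed.
Lemma CcR_zero : CcR (fun _ => 0). Proof. exists []; auto. Qed.

Definition resid (fr phi : V -> R) (i : Idx) := J fr i - J phi i.

Lemma cv_const (r : R) : Un_cv (fun _ => r) r.
Proof. intros e He; exists 0%nat; intros; unfold Rdist; rewrite Rminus_diag, Rabs_R0; auto. Qed.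

Lemma projection fr : l2c (J fr) -> exists (phi : nat -> V -> R) (h : V -> R),
  (forall n, CcR (phi n)) /\ l2c (J h) /\
  (forall x, Un_cv (fun n => phi n x) (fr x - h x)) /\
  (forall eps, 0 < eps -> exists N, forall n k, (N <= n)%nat -> (N <= k)%nat -> forall x y,
      b x y * (((phi n x - phi k x) - (phi n y - phi k y)) * ((phi n x - phi k x) - (phi n y - phi k y))) <= eps) /\
  (forall psi, CcR psi -> ip (J h) (J psi) = 0).
Proof.
  intros Hfr.
  assert (Hres : forall phi, CcR phi -> l2c (resid fr phi)).
  { intros phi Hp. apply l2_minus; auto. apply CcR_l2; auto. }
  set (E := fun r => exists phi, CcR phi /\ r = - nn (resid fr phi)).
  assert (bE : bound E). { exists 0. intros r [phi [_ ->]]. pose proof (nn_nonneg (resid fr phi)). lra. }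
  assert (nE : exists r, E r). { exists (- nn (resid fr (fun _ => 0))). exists (fun _ => 0); split; auto. apply CcR_zero. }
  destruct (completeness E bE nE) as [M [HMub HMlub]].
  set (d := - M).
  assert (Hd : forall phi, CcR phi -> d <= nn (resid fr phi)).
  { intros phi Hp. assert (- nn (resid fr phi) <= M) by (apply HMub; exists phi; auto). unfold d; lra. }
  assert (Hex : forall n : nat, exists phi, CcR phi /\ nn (resid fr phi) < d + / (INR n + 1)).
  { intros n. assert (Hp : 0 < / (INR n + 1)) by (apply Rinv_0_lt_compat; pose proof (pos_INR n); lra).
    apply NNPP; intro Hn. assert (M <= M - / (INR n + 1)).
    { apply HMlub. intros r [phi [Hphi ->]]. apply Rnot_lt_le; intro Hlt. apply Hn. exists phi; split; auto.
      unfold d; lra. }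
    lra. }
  set (phi := fun n => proj1_sig (constructive_indefinite_description _ (Hex n))).
  assert (Hphi : forall n, CcR (phi n) /\ nn (resid fr (phi n)) < d + / (INR n + 1)).
  { intros n; unfold phi; destruct constructive_indefinite_description; auto. }
  set (A := fun n => resid fr (phi n)).
  assert (HA : forall n, l2c (A n)) by (intros n; apply Hres, Hphi).
  assert (HCa : forall eps, 0 < eps -> exists N, forall n k, (N <= n)%nat -> (N <= k)%nat ->
     nn (fun i => A n i - A k i) <= eps).
  { intros eps He. destruct (inv_small (eps/4)) as [N HN]; [lra|]. exists N. intros n k Hn Hk.
    rewrite parallelogram; auto.
    assert (Emid : nn (fun i => (A n i + A k i) / 2) = nn (resid fr (fun y => phi n y + /2 * (phi k y - phi n y)))).
    { unfold nn. apply sumT_ext. intros i. unfold A, resid. 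
      replace (J (fun y => phi n y + / 2 * (phi k y - phi n y)) i) with (J (phi n) i + /2 * (J (phi k) i - J (phi n) i)).
      field. destruct i; simpl; field. }
    rewrite Emid.
    assert (d <= nn (resid fr (fun y => phi n y + / 2 * (phi k y - phi n y)))).
    { apply Hd. destruct (proj1 (Hphi n)) as [l1 L1]. destruct (proj1 (Hphi k)) as [l2 L2].
      exists (l1 ++ l2). intros x Hx. rewrite L1, L2. ring.
      intros Q; apply Hx, in_or_app; auto. intros Q; apply Hx, in_or_app; auto. }
    destruct (Hphi n) as [_ H1]; destruct (Hphi k) as [_ H2].
    pose proof (HN n Hn). pose proof (HN k Hk). fold (A n) in H1. fold (A k) in H2. lra. }
  destruct (l2_complete A HA HCa) as [Z [HZ [HZcv HZnn]]].
  set (h := fun x => Z (inr x) / sqrt (c x + m x)).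
  assert (Hsq : forall x, 0 < sqrt (c x + m x)) by (intros; apply sqrt_lt_R0, cm_pos).
  assert (Hcvh : forall x, Un_cv (fun n => fr x - phi n x) (h x)).
  { intros x. assert (Un_cv (fun n => A n (inr x) * / sqrt (c x + m x)) (h x)).
    { unfold h. apply CV_mult; auto. apply cv_const. }
    intros e He. destruct (H e He) as [N HN]. exists N; intros n Hn. specialize (HN n Hn).
    replace (fr x - phi n x) with (A n (inr x) * / sqrt (c x + m x)); auto.
    unfold A, resid; simpl. field. specialize (Hsq x); lra. }
  assert (HZJ : forall i, Z i = J h i).
  { intros [[p q]|x].
    - eapply UL_sequence. apply HZcv.
      assert (Un_cv (fun n => sqrt (b (fst (p,q)) (snd (p,q)) / 2) * ((fr p - phi n p) - (fr q - phi n q)))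
               (J h (inl (p, q)))).
      { simpl. apply CV_mult. apply cv_const. apply CV_minus; auto. }
      intros e He. destruct (H e He) as [N HN]. exists N; intros n Hn. specialize (HN n Hn).
      unfold A, resid. simpl. simpl in HN. replace (sqrt (b p q / 2) * (fr p - fr q) - sqrt (b p q / 2) * (phi n p - phi n q))
        with (sqrt (b p q / 2) * (fr p - phi n p - (fr q - phi n q))) by ring. auto.
    - simpl. unfold h. field. specialize (Hsq x); lra. }
  assert (HJh : l2c (J h)) by (apply l2_ext with Z; auto).
  exists phi, h. split; [intros; apply Hphi|]. split; auto. split.
  { intros x. intros e He. destruct (Hcvh x e He) as [N HN]. exists N. intros n Hn. specialize (HN n Hn).
    unfold Rdist in *. replace (phi n x - (fr x - h x)) with (- (fr x - phi n x - h x)) by ring.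
    rewrite Rabs_Ropp; auto. }
  split.
  { intros eps He. destruct (HCa (eps/2)) as [N HN]; [lra|]. exists N. intros n k Hn Hk x y.
    specialize (HN k n Hk Hn). pose proof (coord_le (fun i => A k i - A n i) (inl (x, y))).
    assert (l2c (fun i => A k i - A n i)) by (apply l2_minus; auto). specialize (H H0).
    assert (Ec : (A k (inl (x, y)) - A n (inl (x, y))) * (A k (inl (x, y)) - A n (inl (x, y))) =
       /2 * (b x y * (((phi n x - phi k x) - (phi n y - phi k y)) * ((phi n x - phi k x) - (phi n y - phi k y))))).
    { unfold A, resid; simpl.
      replace (sqrt (b x y / 2) * (fr x - fr y) - sqrt (b x y / 2) * (phi k x - phi k y) -
        (sqrt (b x y / 2) * (fr x - fr y) - sqrt (b x y / 2) * (phi n x - phi n y))) with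
        (sqrt (b x y / 2) * ((phi n x - phi k x) - (phi n y - phi k y))) by ring.
      replace (sqrt (b x y / 2) * (phi n x - phi k x - (phi n y - phi k y)) *
        (sqrt (b x y / 2) * (phi n x - phi k x - (phi n y - phi k y)))) with
        ((sqrt (b x y / 2) * sqrt (b x y / 2)) * ((phi n x - phi k x - (phi n y - phi k y)) * (phi n x - phi k x - (phi n y - phi k y)))) by ring.
      rewrite sqrt_sqrt by (pose proof (Hb_nonneg x y); lra). field. }
    cbv beta in H. rewrite Ec in H. lra. }
  intros psi Hpsi.
  pose proof (CcR_l2 psi Hpsi) as Hl2p.
  set (C := ip (J h) (J psi)). set (K := nn (J psi)).
  assert (EC : C = ip Z (J psi)) by (unfold C, ip; apply sumT_ext; intros; rewrite HZJ; auto).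
  assert (HK : 0 <= K) by apply nn_nonneg.
  assert (Hquad : forall t, 0 <= - 2 * t * C + t * t * K).
  { intros t. apply Rnot_lt_le; intro Hneg. set (delta := - (- 2 * t * C + t * t * K)).
    assert (Hdel : 0 < delta) by (unfold delta; lra).
    set (e' := delta / (3 * (2 * Rabs t + 1))).
    assert (He' : 0 < e') by (unfold e'; apply Rdiv_lt_0_compat; auto; pose proof (Rabs_pos t); lra).
    set (lam := (K + 1) / e').
    assert (Hlam : 0 < lam) by (unfold lam; apply Rdiv_lt_0_compat; lra).
    destruct (HZnn (e' * e' / (K + 1))) as [N1 HN1]. apply Rdiv_lt_0_compat; nra.
    destruct (inv_small (delta / 3)) as [N2 HN2]; [lra|].
    set (n := max N1 N2).
    specialize (HN1 n (Nat.le_max_l _ _)). specialize (HN2 n (Nat.le_max_r _ _)).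
    destruct (Hphi n) as [Hcn Hnn].
    assert (Hdiff : Rabs (ip (A n) (J psi) - C) <= e').
    { rewrite EC, <- ip_minus_l; auto.
      eapply Rle_trans. apply (ip_bound _ _ lam); auto. apply l2_minus; auto.
      assert (lam * nn (fun i => A n i - Z i) <= e').
      { unfold lam. apply Rle_trans with ((K + 1) / e' * (e' * e' / (K + 1))).
        apply Rmult_le_compat_l; [apply Rlt_le, Rdiv_lt_0_compat; lra|auto]. right; field; lra. }
      assert (K / lam <= e').
      { unfold lam. replace (K / ((K + 1) / e')) with (K * e' / (K + 1)) by (field; lra).
        apply Rmult_le_reg_r with (K + 1); [lra|]. replace (K * e' / (K + 1) * (K + 1)) with (K * e') by (field; lra). nra. }
      fold K. lra. }
    assert (Hge : d <= nn (fun i => A n i - t * J psi i)).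
    { replace (nn (fun i => A n i - t * J psi i)) with (nn (resid fr (fun y => phi n y + t * psi y))).
      apply Hd, CcR_lin; auto. unfold nn; apply sumT_ext; intros i. unfold A, resid. rewrite J_lin. ring. }
    rewrite nn_expand in Hge; auto.
    fold (A n) in Hnn. fold K in Hge.
    assert (Rabs (2 * t) * Rabs (ip (A n) (J psi) - C) <= delta / 3).
    { eapply Rle_trans. apply Rmult_le_compat_l. apply Rabs_pos. exact Hdiff.
      unfold e'. rewrite Rabs_mult, (Rabs_right 2) by lra. pose proof (Rabs_pos t).
      replace (2 * Rabs t * (delta / (3 * (2 * Rabs t + 1)))) with ((delta / 3) * (2 * Rabs t / (2 * Rabs t + 1))) by (field; lra).
      rewrite <- (Rmult_1_r (delta/3)) at 2. apply Rmult_le_compat_l; [lra|].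
      apply Rmult_le_reg_r with (2 * Rabs t + 1); [lra|]. unfold Rdiv. rewrite Rmult_assoc, Rinv_l; lra. }
    rewrite <- Rabs_mult in H. apply Rabs_le_inv in H.
    unfold delta in *. nra. }
  specialize (Hquad (C / (K + 1))).
  assert (C * C <= 0).
  { replace (- 2 * (C / (K + 1)) * C + C / (K + 1) * (C / (K + 1)) * K) with
      (- (C * C) * (K + 2) / ((K + 1) * (K + 1))) in Hquad by (field; lra).
    apply Rmult_le_compat_r with (r := (K + 1) * (K + 1)) in Hquad; [|nra].
    unfold Rdiv in Hquad. rewrite Rmult_assoc, Rinv_l in Hquad by nra. nra. }
  nra.
Qed.
Lemma CL1 k u : Cc V u -> CcR (fun x => comp k (u x)).
Proof. intros [l Hl]; exists l; intros x Hx; rewrite Hl; auto; apply comp_C0. Qed.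

Lemma CL2 k u w : (forall x, Ltilde_at V m b c u x (w x)) -> LT (fun x => comp k (u x)) (fun x => comp k (w x)).
Proof. intros H x. destruct (H x) as [s [Hs Hw]]. exists (comp k s). split.
  - eapply HS_ext; [|apply (comp_HasSumC k _ _ Hs)]. intros y; simpl. rewrite comp_scale, comp_sub; auto.
  - rewrite Hw, comp_scale, comp_add, comp_scale; auto.
Qed.

Lemma CL3 k u : l2 V m u -> l2c (sm (fun x => comp k (u x))).
Proof. intros [s Hs]. apply HasSumR_iff in Hs.
  destruct (HS_dom (fun x => sm (fun x => comp k (u x)) x * sm (fun x => comp k (u x)) x) (fun x => Cnorm2 (u x) * m x) s) with (2 := Hs) as [t [Ht _]].
  intros x. rewrite sm_sq. pose proof (Hm x). pose proof (comp_sq k (u x)). split.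
  apply Rmult_le_pos; [lra|apply sq_nonneg']. rewrite Rmult_comm. apply Rmult_le_compat_r; lra.
  exists t; auto. Qed.

Lemma CL4 k us u : l2_converges_to V m us u -> forall eps, 0 < eps -> exists N, forall n, (N <= n)%nat ->
  l2c (fun x => sm (fun x => comp k (us n x)) x - sm (fun x => comp k (u x)) x) /\
  nn (fun x => sm (fun x => comp k (us n x)) x - sm (fun x => comp k (u x)) x) <= eps.
Proof. intros H eps He. destruct (H eps He) as [N HN]. exists N. intros n Hn.
  destruct (HN n Hn) as [s [Hs Hse]]. apply HasSumR_iff in Hs.
  destruct (HS_dom (fun x => (sm (fun x => comp k (us n x)) x - sm (fun x => comp k (u x)) x) *
     (sm (fun x => comp k (us n x)) x - sm (fun x => comp k (u x)) x)) (fun x => Cnorm2 (Csub (us n x) (u x)) * m x) s) with (2 := Hs) as [t [Ht Hts]].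
  intros x. unfold sm. rewrite <- Rmult_minus_distr_l. rewrite <- (comp_sub k).
  replace (sqrt (m x) * comp k (Csub (us n x) (u x)) * (sqrt (m x) * comp k (Csub (us n x) (u x)))) with
    ((sqrt (m x) * sqrt (m x)) * (comp k (Csub (us n x) (u x)) * comp k (Csub (us n x) (u x)))) by ring.
  pose proof (Hm x). rewrite sqrt_sqrt by lra. pose proof (comp_sq k (Csub (us n x) (u x))). split.
  apply Rmult_le_pos; [lra|apply sq_nonneg']. rewrite Rmult_comm. apply Rmult_le_compat_r; lra.
  split. exists t; auto. unfold nn. rewrite (sumT_eq _ t Ht). lra. Qed.

Lemma CL5 k us u : l2_converges_to V m us u -> l2 V m u -> forall eps, 0 < eps -> exists N, forall n, (N <= n)%nat ->
  l2c (sm (fun x => comp k (us n x))) /\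
  nn (fun x => sm (fun x => comp k (us n x)) x - sm (fun x => comp k (u x)) x) <= eps.
Proof. intros H Hu eps He. destruct (CL4 k us u H eps He) as [N HN]. exists N. intros n Hn.
  destruct (HN n Hn) as [H1 H2]. split; auto.
  apply l2_ext with (fun x => (sm (fun x => comp k (us n x)) x - sm (fun x => comp k (u x)) x) + sm (fun x => comp k (u x)) x).
  intros; ring. apply l2_plus; auto. apply CL3; auto. Qed.

Lemma part2 f : DQN V m b c f -> boundary_value_nonzero V b f -> ~ essentially_selfadjoint V m (L0_graph V m b c).
Proof.
  intros [[sl Hsl] [se [s1 [s2 [Hs1 [Hs2 Hse]]]]]] [xs [HC [HN [z [Hz Hfz]]]]] HESA.
  apply HasSumR_iff in Hsl, Hs1, Hs2.
  destruct (nonzero_comp z Hz) as [k Hk].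
  set (fr := fun x => comp k (f x)).
  assert (Hfr : l2c (J fr)).
  { destruct (HS_dom (fun p : V * V => b (fst p) (snd p) * ((fr (fst p) - fr (snd p)) * (fr (fst p) - fr (snd p)))) (fun p : V * V => b (fst p) (snd p) * Cnorm2 (Csub (f (fst p)) (f (snd p)))) s1) with (2 := Hs1) as [t1 [Ht1 _]].
    { intros p. pose proof (Hb_nonneg (fst p) (snd p)). pose proof (comp_sq k (Csub (f (fst p)) (f (snd p)))).
      unfold fr. rewrite comp_sub in H0. split. apply Rmult_le_pos; [lra|apply sq_nonneg']. apply Rmult_le_compat_l; lra. }
    destruct (HS_dom (fun x => (c x + m x) * (fr x * fr x)) (fun x => c x * Cnorm2 (f x) + Cnorm2 (f x) * m x) (s2 + sl)) with (2 := HS_plus _ _ _ _ Hs2 Hsl) as [t2 [Ht2 _]].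
    { intros x. pose proof (cm_pos x). pose proof (comp_sq k (f x)). pose proof (Hc x). pose proof (Hm x). unfold fr. split.
      apply Rmult_le_pos; [lra|apply sq_nonneg']. simpl. nra. }
    apply (J_l2 fr t1 t2); auto. }
  destruct (projection fr Hfr) as [phi [h [Hcc [HJh [Hcv [Hedge Horth]]]]]].
  assert (Hbv : Un_cv (fun n => fr (xs n) - h (xs n)) 0).
  { apply (BV0 V b xs phi (fun x => fr x - h x)); auto. }
  assert (Hfrz : Un_cv (fun n => fr (xs n)) (comp k z)) by (apply C_cv_comp; auto).
  assert (Hhz : Un_cv (fun n => h (xs n)) (comp k z)).
  { pose proof (CV_minus _ _ _ _ Hfrz Hbv). rewrite Rminus_0_r in H.
    intros e He; destruct (H e He) as [N HN']; exists N; intros n Hn. specialize (HN' n Hn).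
    replace (h (xs n)) with (fr (xs n) - (fr (xs n) - h (xs n))) by ring; auto. }
  assert (Hnz : exists x, h x <> 0).
  { apply NNPP; intro Hn. apply Hk. apply (UL_sequence _ _ _ Hhz).
    intros e He; exists 0%nat; intros n _. unfold Rdist. rewrite Rminus_0_r.
    destruct (Req_dec (h (xs n)) 0) as [E|E]. rewrite E, Rabs_R0; auto. exfalso; apply Hn; eauto. }
  assert (Hheq : forall y, exists S, HS (fun x => b y x * (h y - h x)) S /\ S + (c y + m y) * h y = 0).
  { intros y. destruct (K_lemma h y HJh) as [S [H1 H2]]. exists S; split; auto.
    rewrite <- H2. apply Horth. exists [y]. intros x Hx. unfold dlt. destruct (deq x y); [subst; exfalso; apply Hx; left; auto|auto]. }
  destruct (nn_J_ge_sm h HJh) as [Hsmh _].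
  assert (Hpos : 0 < nn (sm h)).
  { destruct Hnz as [x0 Hx0]. eapply Rlt_le_trans; [|apply (coord_le _ x0 Hsmh)].
    rewrite sm_sq. apply Rmult_lt_0_compat; auto. assert (h x0 * h x0 <> 0) by (apply Rmult_integral_contrapositive; auto).
    pose proof (sq_nonneg' (h x0)). lra. }
  set (hC := fun x => RtoC (h x)). set (wC := fun x => RtoC (- h x)).
  assert (Hl2h : l2 V m hC).
  { exists (nn (sm h)). apply HasSumR_iff. eapply HS_ext; [|apply sumT_spec; exact Hsmh].
    intros x. simpl. rewrite sm_sq. unfold Cnorm2; simpl. ring. }
  assert (Hl2w : l2 V m wC).
  { exists (nn (sm h)). apply HasSumR_iff. eapply HS_ext; [|apply sumT_spec; exact Hsmh].
    intros x. simpl. rewrite sm_sq. unfold Cnorm2; simpl. ring. }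
  assert (Hadj : adjoint_graph V m (closure_graph V m (L0_graph V m b c)) hC wC).
  { split; [auto|split; [auto|]].
    intros u u' [Hu [Hu' [us [ws [HG [Hcu Hcw]]]]]].
    assert (KEY : forall k', ip (sm (fun x => comp k' (u' x))) (sm h) + ip (sm (fun x => comp k' (u x))) (sm h) = 0).
    { intros k'.
      assert (HU : l2c (sm (fun x => comp k' (u x)))) by (apply CL3; auto).
      assert (HU' : l2c (sm (fun x => comp k' (u' x)))) by (apply CL3; auto).
      assert (E : ip (sm (fun x => comp k' (u' x))) (sm h) + ip (sm (fun x => comp k' (u x))) (sm h) =
                  ip (fun x => sm (fun x => comp k' (u' x)) x + sm (fun x => comp k' (u x)) x) (sm h)).
      { unfold ip. rewrite <- sumT_plus; try (apply l2_prod; auto). apply sumT_ext; intros; ring. }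
      rewrite E.
      destruct (CL5 k' us u Hcu Hu 1 Rlt_0_1) as [N0 HN0].
      destruct (CL5 k' ws u' Hcw Hu' 1 Rlt_0_1) as [N0' HN0'].
      set (M0 := max N0 N0').
      apply (LIM0 _ _ (fun n i => sm (fun x => comp k' (ws (n + M0)%nat x)) i + sm (fun x => comp k' (us (n + M0)%nat x)) i)).
      - apply l2_plus; auto.
      - auto.
      - intros n. apply l2_plus. apply (HN0' (n + M0)%nat); unfold M0; lia. apply (HN0 (n + M0)%nat); unfold M0; lia.
      - intros n. destruct (HG (n + M0)%nat) as [Hcc1 Hlt1]. unfold ip. apply sumT_eq.
        eapply HS_ext; [|apply (Green _ _ h Hheq (CL1 k' _ Hcc1) (CL2 k' _ _ Hlt1))].
        intros x; simpl. unfold sm. replace (sqrt (m x) * comp k' (ws (n + M0)%nat x) + sqrt (m x) * comp k' (us (n + M0)%nat x))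
          with (sqrt (m x) * (comp k' (ws (n + M0)%nat x) + comp k' (us (n + M0)%nat x))) by ring.
        pose proof (sm_prod (fun x => comp k' (ws (n + M0)%nat x) + comp k' (us (n + M0)%nat x)) h x). unfold sm in H.
        rewrite H. ring.
      - intros eps He. destruct (CL5 k' us u Hcu Hu (eps/4)) as [N1 HN1]; [lra|].
        destruct (CL5 k' ws u' Hcw Hu' (eps/4)) as [N2 HN2]; [lra|].
        exists (max N1 N2). intros n Hn.
        destruct (HN1 (n + M0)%nat) as [A1 B1]; [lia|]. destruct (HN2 (n + M0)%nat) as [A2 B2]; [lia|].
        rewrite (nn_ext _ (fun i => (sm (fun x => comp k' (u' x)) i - sm (fun x => comp k' (ws (n + M0)%nat x)) i) +
                                     (sm (fun x => comp k' (u x)) i - sm (fun x => comp k' (us (n + M0)%nat x)) i))) by (intros; ring).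
        eapply Rle_trans. apply nn_plus_le; apply l2_minus; auto.
        rewrite (nn_sym (sm (fun x => comp k' (u' x)))), (nn_sym (sm (fun x => comp k' (u x)))). lra. }
    exists (ip (sm (fun x => fst (u' x))) (sm h), ip (sm (fun x => snd (u' x))) (sm h)).
    assert (Hu1 := CL3 true u Hu). assert (Hu2 := CL3 false u Hu).
    assert (Hu1' := CL3 true u' Hu'). assert (Hu2' := CL3 false u' Hu').
    simpl in Hu1, Hu2, Hu1', Hu2'. pose proof (KEY true) as K1. pose proof (KEY false) as K2. simpl in K1, K2.
    split; apply HasSumC_iff; simpl; split.
    - eapply HS_ext; [|apply sumT_spec, (l2_prod _ _ Hu1' Hsmh)]. intros x; simpl. unfold hC; simpl.
      rewrite sm_prod. ring.
    - eapply HS_ext; [|apply sumT_spec, (l2_prod _ _ Hu2' Hsmh)]. intros x; simpl. unfold hC; simpl.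
      rewrite sm_prod. ring.
    - replace (ip (sm (fun x => fst (u' x))) (sm h)) with (- ip (sm (fun x => fst (u x))) (sm h)) by lra.
      eapply HS_ext; [|apply HS_opp, sumT_spec, (l2_prod _ _ Hu1 Hsmh)].
      intros x; simpl. unfold wC; simpl. rewrite sm_prod. ring.
    - replace (ip (sm (fun x => snd (u' x))) (sm h)) with (- ip (sm (fun x => snd (u x))) (sm h)) by lra.
      eapply HS_ext; [|apply HS_opp, sumT_spec, (l2_prod _ _ Hu2 Hsmh)].
      intros x; simpl. unfold wC; simpl. rewrite sm_prod. ring. }
  apply HESA in Hadj. destruct Hadj as [_ [_ [us [ws [HG [Hcu Hcw]]]]]].
  destruct (CL5 true us hC Hcu Hl2h 1 Rlt_0_1) as [N0 HN0].
  destruct (CL5 true ws wC Hcw Hl2w 1 Rlt_0_1) as [N0' HN0'].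
  set (M0 := max N0 N0').
  apply (FIN (sm h) (fun n => sm (fun x => fst (us (n + M0)%nat x))) (fun n => sm (fun x => fst (ws (n + M0)%nat x)))); auto.
  - intros n. apply (HN0 (n + M0)%nat); unfold M0; lia.
  - intros n. apply (HN0' (n + M0)%nat); unfold M0; lia.
  - intros eps He. destruct (CL5 true us hC Hcu Hl2h eps He) as [N1 HN1]. exists N1. intros n Hn.
    destruct (HN1 (n + M0)%nat) as [_ B1]; [lia|]. simpl in B1. unfold hC in B1; simpl in B1. exact B1.
  - intros eps He. destruct (CL5 true ws wC Hcw Hl2w eps He) as [N1 HN1]. exists N1. intros n Hn.
    destruct (HN1 (n + M0)%nat) as [_ B1]; [lia|]. simpl in B1. unfold wC in B1; simpl in B1.
    rewrite (nn_ext _ (fun x => sm (fun x => fst (ws (n + M0)%nat x)) x - sm (fun x => - h x) x)); auto.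
    intros x; unfold sm; ring.
  - intros n. destruct (HG (n + M0)%nat) as [Hcc1 Hlt1].
    pose proof (pos_lemma _ _ (CL1 true _ Hcc1) (CL2 true _ _ Hlt1)). simpl in H.
    eapply Rle_trans; [exact H|]. right. unfold ip. apply sumT_ext. intros x. unfold sm.
    pose proof (sm_prod (fun x => fst (ws (n + M0)%nat x) + fst (us (n + M0)%nat x)) (fun x => fst (us (n + M0)%nat x)) x).
    unfold sm in H0. rewrite <- H0. ring.
Qed.
End Part2a.


Theorem mainTheorem12
  (V : Type)
  (HV : exists enc : V -> nat, forall x y, enc x = enc y -> x = y)
  (m : V -> R) (Hm : forall x, 0 < m x)
  (b : V -> V -> R) (c : V -> R)
  (Hb_nonneg : forall x y, 0 <= b x y)
  (Hb_diag : forall x, b x x = 0)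
  (Hb_sym : forall x y, b x y = b y x)
  (Hb_sum : forall x, exists s, HasSumR (fun y => b x y) s)
  (Hc : forall x, 0 <= c x)
  (Hconn : connected V b)
  (Hf : exists f : V -> Cplx, DQN V m b c f /\ boundary_value_nonzero V b f) :
  ~ form_eq V (DQN V m b c) (QN_val V b c) (DQD V m b c) (QD_val V m b c) /\
  (FC V m b c -> ~ essentially_selfadjoint V m (L0_graph V m b c)).
Proof.
  destruct Hf as [f [Hdqn Hbv]].
  assert (Hb_sum' : forall x, exists s, HS (fun y => b x y) s).
  { intros x. destruct (Hb_sum x) as [s Hs]. exists s. apply HasSumR_iff; auto. }
  split.
  - intros [Hdom _]. apply (part1 V m Hm b c Hb_nonneg Hc f Hdqn Hbv). apply Hdom; auto.
  - intros _. apply (part2 V m Hm b c Hb_nonneg Hb_diag Hb_sym Hb_sum' Hc f Hdqn Hbv).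
Qed.
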